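(* Let $\alpha,\kappa>0$, $\beta\in\mathbb R$ and $\varepsilon,\nu\geqslant0$. The ordinary differential equation $$\ddot\tau=\frac{2\kappa}{\tau}+\frac{\varepsilon^2}{\tau^3}-\nu\frac{\dot\tau}{\tau^2},\qquad\tau(0)=\alpha,\quad\dot\tau(0)=\beta,$$ has a unique solution $\tau\in C^2(0,\infty)$, and it satisfies, as $t\to\infty$, $\tau(t)\sim 2t\sqrt{\kappa\ln t}$ and $\dot\tau(t)\sim2\sqrt{\kappa\ln t}$. *)

(* Defs.v *)
From Stdlib Require Import Reals.
From Coquelicot Require Import Coquelicot.
Open Scope R_scope.

Definition ode_solution (kappa eps nu alpha beta : R) (tau : R -> R) : Prop :=
  (forall t, 0 <= t -> 0 < tau t) /\
  tau 0 = alpha /\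
  filterlim (fun h => (tau h - tau 0) / h) (at_right 0) (locally beta) /\
  filterlim (Derive tau) (at_right 0) (locally beta) /\
  (forall t, 0 < t ->
     ex_derive tau t /\ ex_derive (Derive tau) t /\
     Derive (Derive tau) t =
       2 * kappa / tau t + eps ^ 2 / (tau t) ^ 3 - nu * Derive tau t / (tau t) ^ 2).

(* Main.v *)
Require Import Defs.
From Stdlib Require Import Reals Lra Lia Psatz Ranalysis5.
From Coquelicot Require Import Coquelicot.
Open Scope R_scope.

Lemma ballE (x e y : R) : ball x e y <-> Rabs (y - x) < e.
Proof. reflexivity. Qed.

Lemma ball_abs (x e y : R) : ball x e y -> Rabs (y - x) < e.
Proof. intros H; exact H. Qed.

Lemma abs_ball (x e y : R) : Rabs (y - x) < e -> ball x e y.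
Proof. intros H; exact H. Qed.

Lemma incr_on (f df : R -> R) (a : R) :
  (forall x, a < x -> is_derive f x (df x)) -> (forall x, a < x -> 0 <= df x) ->
  forall s t, a < s -> s <= t -> f s <= f t.
Proof.
  intros Hd Hp s t Hs Hst.
  destruct (Req_dec s t) as [->|Hne]; [lra|].
  destruct (MVT_gen f s t df) as [c [Hc Heq]].
  - intros x Hx. apply Hd. rewrite Rmin_left in Hx by lra. lra.
  - intros x Hx. apply continuity_pt_filterlim.
    apply (ex_derive_continuous f x). exists (df x). apply Hd.
    rewrite Rmin_left in Hx by lra. lra.
  - rewrite Rmin_left in Hc by lra. rewrite Rmax_right in Hc by lra.
    assert (0 <= df c) by (apply Hp; lra). nra.
Qed.

Lemma decr_on (f df : R -> R) (a : R) :
  (forall x, a < x -> is_derive f x (df x)) -> (forall x, a < x -> df x <= 0) ->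
  forall s t, a < s -> s <= t -> f t <= f s.
Proof.
  intros Hd Hp s t Hs Hst.
  assert (- f s <= - f t); [|lra].
  apply (incr_on (fun x => - f x) (fun x => - df x) a); auto.
  - intros x Hx. exact (is_derive_opp f x (df x) (Hd x Hx)).
  - intros x Hx. specialize (Hp x Hx). lra.
Qed.

Lemma decr_right_lim (f : R -> R) (l : R) :
  (forall s t, 0 < s -> s <= t -> f t <= f s) ->
  filterlim f (at_right 0) (locally l) -> forall t, 0 < t -> f t <= l.
Proof.
  intros Hm Hl t Ht. destruct (Rle_dec (f t) l) as [|Hn]; auto.
  exfalso. assert (He : 0 < f t - l) by lra.
  destruct (proj1 (filterlim_locally f l) Hl (mkposreal _ He)) as [d Hd].
  set (y := Rmin t (d/2)).
  assert (Hy0 : 0 < y) by (unfold y; apply Rmin_pos; [lra| destruct d; simpl; lra]).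
  assert (Hyt : y <= t) by apply Rmin_l.
  assert (Hyd : y <= d/2) by apply Rmin_r.
  specialize (Hd y). assert (Hb : ball 0 d y).
  { apply ballE. rewrite Rminus_0_r, Rabs_pos_eq by lra. destruct d; simpl in *; lra. }
  specialize (Hd Hb Hy0). apply ballE in Hd.
  specialize (Hm y t Hy0 Hyt). apply Rabs_def2 in Hd. change (minus (f y) l) with (f y - l) in Hd. simpl in Hd. lra.
Qed.

Ltac absd := repeat match goal with
  | |- context [Rcase_abs ?x] => destruct (Rcase_abs x)
  | |- context [Rle_dec ?x ?y] => destruct (Rle_dec x y) end.

Lemma abs_mul_le (a b A B : R) : Rabs a <= A -> Rabs b <= B -> Rabs (a * b) <= A * B.
Proof.
  intros H1 H2. rewrite Rabs_mult. apply Rmult_le_compat; auto; apply Rabs_pos.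
Qed.

Lemma inv_prod_le (m p : R) : 0 < m -> m <= p -> Rabs (/ p) <= / m.
Proof.
  intros Hm Hp. rewrite Rabs_pos_eq. apply Rinv_le_contravar; lra.
  apply Rlt_le, Rinv_0_lt_compat; lra.
Qed.

Lemma lip_inv1 (m X1 X2 : R) : 0 < m -> m <= X1 -> m <= X2 ->
  Rabs (/ X1 - / X2) <= Rabs (X1 - X2) * / m^2.
Proof.
  intros Hm H1 H2.
  replace (/ X1 - / X2) with ((X2 - X1) * / (X1 * X2)) by (field; lra).
  apply abs_mul_le; [rewrite Rabs_minus_sym; lra|]. apply inv_prod_le; nra.
Qed.

Lemma lip_inv3 (m X1 X2 : R) : 0 < m -> m <= X1 -> m <= X2 ->
  Rabs (/ X1^3 - / X2^3) <= Rabs (X1 - X2) * (3 / m^4).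
Proof.
  intros Hm H1 H2.
  replace (/ X1^3 - / X2^3) with ((X2 - X1) * (/ (X1 * X2^3) + / (X1^2 * X2^2) + / (X1^3 * X2))) by (field; lra).
  apply abs_mul_le; [rewrite Rabs_minus_sym; lra|].
  assert (m^2 <= X1^2) by nra. assert (m^2 <= X2^2) by nra.
  assert (m^3 <= X1^3) by nra. assert (m^3 <= X2^3) by nra.
  assert (A1 : Rabs (/ (X1 * X2^3)) <= / m^4) by (apply inv_prod_le; [apply pow_lt; lra| replace (m^4) with (m*m^3) by ring; apply Rmult_le_compat; nra]).
  assert (A2 : Rabs (/ (X1^2 * X2^2)) <= / m^4) by (apply inv_prod_le; [apply pow_lt; lra| replace (m^4) with (m^2*m^2) by ring; apply Rmult_le_compat; nra]).
  assert (A3 : Rabs (/ (X1^3 * X2)) <= / m^4) by (apply inv_prod_le; [apply pow_lt; lra| replace (m^4) with (m^3*m) by ring; apply Rmult_le_compat; nra]).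
  eapply Rle_trans. apply Rabs_triang. eapply Rle_trans. apply Rplus_le_compat_r, Rabs_triang.
  unfold Rdiv. lra.
Qed.

Lemma lip_frac2 (m c X1 X2 W1 W2 : R) : 0 < m -> m <= X1 -> m <= X2 -> 0 <= c ->
  Rabs W2 <= c * X2 ->
  Rabs (W1 / X1^2 - W2 / X2^2) <= Rabs (W1 - W2) * / m^2 + Rabs (X1 - X2) * (2 * c / m^2).
Proof.
  intros Hm H1 H2 Hc HW.
  replace (W1 / X1^2 - W2 / X2^2) with
    ((W1 - W2) * / X1^2 + (W2 / X2) * ((X2 - X1) * (/ X1^2 + / (X1 * X2)))) by (field; lra).
  eapply Rle_trans. apply Rabs_triang. apply Rplus_le_compat.
  - apply abs_mul_le; [lra|]. apply inv_prod_le; nra.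
  - replace (2 * c / m^2) with (c * (/ m^2 + / m^2)) by (field; lra).
    rewrite (Rmult_comm (Rabs (X1 - X2))), Rmult_assoc.
    apply abs_mul_le.
    + rewrite Rabs_div by lra. rewrite (Rabs_pos_eq X2) by lra.
      apply (Rmult_le_reg_r X2); [lra|]. replace (Rabs W2 / X2 * X2) with (Rabs W2) by (field; lra). lra.
    + rewrite Rmult_comm. apply abs_mul_le; [|rewrite Rabs_minus_sym; lra].
      eapply Rle_trans. apply Rabs_triang. apply Rplus_le_compat; apply inv_prod_le; nra.
Qed.

Lemma lip_max (m x1 x2 : R) : Rabs (Rmax x1 m - Rmax x2 m) <= Rabs (x1 - x2).
Proof.
  unfold Rmax; destruct (Rle_dec x1 m), (Rle_dec x2 m);
  unfold Rabs; absd; lra.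
Qed.

Definition clampv (c v X : R) := Rmax (-(c*X)) (Rmin v (c*X)).

Lemma clamp_bound (c v X : R) : 0 <= c -> 0 <= X -> Rabs (clampv c v X) <= c * X.
Proof.
  intros Hc HX. assert (0 <= c * X) by nra. set (a := c * X) in *.
  unfold clampv. fold a. unfold Rmax, Rmin.
  destruct (Rle_dec v a), (Rle_dec (-a) v), (Rle_dec (-a) a); unfold Rabs; absd; lra.
Qed.

Lemma clamp_lip (c v1 v2 X1 X2 : R) : 0 <= c ->
  Rabs (clampv c v1 X1 - clampv c v2 X2) <= Rabs (v1 - v2) + c * Rabs (X1 - X2).
Proof.
  intros Hc. assert (Rabs (c*X1 - c*X2) = c * Rabs (X1 - X2)).
  { rewrite <- Rmult_minus_distr_l, Rabs_mult, Rabs_pos_eq; lra. }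
  rewrite <- H. set (a1 := c*X1). set (a2 := c*X2). unfold clampv. fold a1 a2.
  unfold Rmax, Rmin.
  destruct (Rle_dec v1 a1), (Rle_dec v2 a2);
  repeat match goal with |- context [Rle_dec ?x ?y] => destruct (Rle_dec x y) end;
  unfold Rabs; absd; lra.
Qed.

Lemma clamp_id (c v X : R) : Rabs v <= c * X -> clampv c v X = v.
Proof.
  intros H. unfold clampv, Rmax, Rmin. apply Rabs_le_between in H. set (a := c * X) in *. destruct (Rle_dec v a);
  repeat match goal with |- context [Rle_dec ?x ?y] => destruct (Rle_dec x y) end; lra.
Qed.

Lemma clamp_sign (c v X : R) : 0 <= c * X -> 0 <= v * clampv c v X.
Proof.
  intros H. unfold clampv, Rmax, Rmin. set (a := c * X) in *. destruct (Rle_dec v a);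
  repeat match goal with |- context [Rle_dec ?x ?y] => destruct (Rle_dec x y) end; nra.
Qed.

Lemma exp_le (x y : R) : x <= y -> exp x <= exp y.
Proof. intros H. destruct (Req_dec x y) as [->|]; [lra|]. apply Rlt_le, exp_increasing; lra. Qed.

Lemma ln_le (x y : R) : 0 < x -> x <= y -> ln x <= ln y.
Proof. intros H1 H2. destruct (Req_dec x y) as [->|]; [lra|]. apply Rlt_le, ln_increasing; lra. Qed.

Lemma ln_le_sub1 (x : R) : 0 < x -> ln x <= x - 1.
Proof. intros H. pose proof (exp_ineq1_le (ln x)). rewrite exp_ln in H0 by lra. lra. Qed.

Lemma ln_le_inv (x y : R) : 0 < x -> 0 < y -> ln x <= ln y -> x <= y.
Proof.
  intros H1 H2 H3. destruct (Req_dec (ln x) (ln y)) as [E|E].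
  - right. apply ln_inv; auto.
  - left. apply ln_lt_inv; auto. lra.
Qed.

Definition F (kappa eps nu x v : R) := 2 * kappa / x + eps ^ 2 / x ^ 3 - nu * v / x ^ 2.

Section Model.
Variables kappa eps nu alpha beta : R.
Hypotheses (Hk : 0 < kappa) (He : 0 <= eps) (Hn : 0 <= nu) (Ha : 0 < alpha).

Definition E0 := beta^2/2 - 2*kappa*ln alpha + eps^2/(2*alpha^2).
Definition mm := exp (- E0/(2*kappa)).
Definition cc := 1 + 2*Rabs E0/mm^2 + 4*kappa/mm.
Definition G x v := let X := Rmax x mm in
  2*kappa*(/X) + eps^2*(/X^3) - nu*(clampv cc v X/X^2).
Definition LL := 2*kappa/mm^2 + 3*eps^2/mm^4 + nu*(1+3*cc)/mm^2.

Lemma mm_pos : 0 < mm.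
Proof. apply exp_pos. Qed.

Lemma mm_le_alpha : mm <= alpha.
Proof.
  unfold mm. rewrite <- (exp_ln alpha) by lra. apply exp_le.
  unfold E0. apply (Rmult_le_reg_r (2*kappa)); [lra|].
  replace (- (beta ^ 2 / 2 - 2 * kappa * ln alpha + eps ^ 2 / (2 * alpha ^ 2)) / (2 * kappa) * (2 * kappa))
    with (- (beta ^ 2 / 2) + 2 * kappa * ln alpha - eps ^ 2 / (2 * alpha ^ 2)) by (field; lra).
  assert (0 <= eps ^ 2 / (2 * alpha ^ 2)).
  { apply Rdiv_le_0_compat. nra. nra. }
  nra.
Qed.

Lemma cc_ge1 : 1 <= cc.
Proof.
  unfold cc. pose proof mm_pos. pose proof (Rabs_pos E0).
  assert (0 <= 2 * Rabs E0 / mm^2) by (apply Rdiv_le_0_compat; nra).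
  assert (0 <= 4 * kappa / mm) by (apply Rdiv_le_0_compat; nra). lra.
Qed.

Lemma lower_of_energy x : 0 < x -> - (2*kappa*ln x) <= E0 -> mm <= x.
Proof.
  intros Hx H. unfold mm. rewrite <- (exp_ln x) by lra. apply exp_le.
  apply (Rmult_le_reg_r (2*kappa)); [lra|].
  replace (- E0 / (2 * kappa) * (2 * kappa)) with (- E0) by (field; lra). lra.
Qed.

Lemma region_of_energy x v : mm <= x -> v^2/2 <= E0 + 2*kappa*ln x -> Rabs v <= cc * x.
Proof.
  intros Hx H. pose proof mm_pos as Hm. pose proof cc_ge1 as Hc.
  assert (Hl : ln x <= x - 1) by (apply ln_le_sub1; lra).
  assert (H1 : E0 <= Rabs E0 * (x^2 / mm^2)).
  { assert (1 <= x^2/mm^2).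
    { apply (Rmult_le_reg_r (mm^2)); [nra|]. replace (x^2/mm^2*mm^2) with (x^2) by (field; lra). nra. }
    pose proof (Rle_abs E0). pose proof (Rabs_pos E0). nra. }
  assert (H2 : x <= x^2 / mm).
  { apply (Rmult_le_reg_r mm); [nra|]. replace (x^2/mm*mm) with (x^2) by (field; lra). nra. }
  assert (H3 : v^2 <= (cc - 1) * x^2).
  { unfold cc. replace ((1 + 2 * Rabs E0 / mm ^ 2 + 4 * kappa / mm - 1) * x ^ 2)
      with (2 * (Rabs E0 * (x^2/mm^2)) + 4 * kappa * (x^2/mm)) by (field; lra). nra. }
  assert (H4 : v^2 <= (cc * x)^2) by nra.
  rewrite <- (Rabs_pos_eq (cc * x)) by nra. apply Rsqr_le_abs_0. unfold Rsqr. nra.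
Qed.

Lemma G_eq_F x v : mm <= x -> Rabs v <= cc * x -> G x v = F kappa eps nu x v.
Proof.
  intros Hx Hv. unfold G, F. rewrite Rmax_left by lra. rewrite clamp_id by auto.
  pose proof mm_pos. field. lra.
Qed.

Lemma G_lip x1 v1 x2 v2 :
  Rabs (G x1 v1 - G x2 v2) <= LL * (Rabs (x1 - x2) + Rabs (v1 - v2)).
Proof.
  pose proof mm_pos as Hm. pose proof cc_ge1 as Hc.
  unfold G. set (X1 := Rmax x1 mm). set (X2 := Rmax x2 mm).
  assert (H1 : mm <= X1) by apply Rmax_r. assert (H2 : mm <= X2) by apply Rmax_r.
  set (W1 := clampv cc v1 X1). set (W2 := clampv cc v2 X2).
  assert (HX : Rabs (X1 - X2) <= Rabs (x1 - x2)) by apply lip_max.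
  assert (HW : Rabs (W1 - W2) <= Rabs (v1 - v2) + cc * Rabs (X1 - X2)) by (apply clamp_lip; lra).
  assert (HW2 : Rabs W2 <= cc * X2) by (apply clamp_bound; lra).
  pose proof (lip_inv1 mm X1 X2 Hm H1 H2) as A.
  pose proof (lip_inv3 mm X1 X2 Hm H1 H2) as B.
  pose proof (lip_frac2 mm cc X1 X2 W1 W2 Hm H1 H2 ltac:(lra) HW2) as C.
  replace (2 * kappa * / X1 + eps ^ 2 * / X1 ^ 3 - nu * (W1 / X1 ^ 2) -
   (2 * kappa * / X2 + eps ^ 2 * / X2 ^ 3 - nu * (W2 / X2 ^ 2)))
   with (2 * kappa * (/ X1 - / X2) + eps^2 * (/ X1 ^ 3 - / X2 ^ 3) + (- nu) * (W1 / X1 ^ 2 - W2 / X2 ^ 2)) by ring.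
  set (a := / X1 - / X2) in *. set (b := / X1 ^ 3 - / X2 ^ 3) in *.
  set (c := W1 / X1 ^ 2 - W2 / X2 ^ 2) in *.
  set (dx := Rabs (x1 - x2)) in *. set (dv := Rabs (v1 - v2)) in *.
  set (dX := Rabs (X1 - X2)) in *. set (dW := Rabs (W1 - W2)) in *.
  assert (E1 : Rabs (2 * kappa * a) <= 2 * kappa * (dx / mm^2)).
  { rewrite Rabs_mult, (Rabs_pos_eq (2*kappa)) by lra. apply Rmult_le_compat_l; [lra|].
    unfold Rdiv. apply Rle_trans with (1 := A). apply Rmult_le_compat_r; auto.
    apply Rlt_le, Rinv_0_lt_compat; nra. }
  assert (E2 : Rabs (eps^2 * b) <= eps^2 * (dx * (3 / mm^4))).
  { rewrite Rabs_mult, (Rabs_pos_eq (eps^2)) by nra. apply Rmult_le_compat_l; [nra|].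
    apply Rle_trans with (1 := B). apply Rmult_le_compat_r; auto.
    apply Rdiv_le_0_compat; [lra|]. apply pow_lt; lra. }
  assert (E3 : Rabs (- nu * c) <= nu * ((dv + cc * dx) * / mm^2 + dx * (2 * cc / mm^2))).
  { rewrite Rabs_mult, Rabs_Ropp, (Rabs_pos_eq nu) by lra. apply Rmult_le_compat_l; [lra|].
    apply Rle_trans with (1 := C). assert (0 <= / mm^2) by (apply Rlt_le, Rinv_0_lt_compat; nra).
    assert (0 <= 2 * cc / mm^2) by (apply Rdiv_le_0_compat; nra).
    assert (cc * dX <= cc * dx) by (apply Rmult_le_compat_l; lra).
    apply Rplus_le_compat; apply Rmult_le_compat_r; auto; lra. }
  eapply Rle_trans. apply Rabs_triang. eapply Rle_trans. apply Rplus_le_compat_r, Rabs_triang.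
  apply Rle_trans with (2 * kappa * (dx / mm^2) + eps^2 * (dx * (3 / mm^4)) +
     nu * ((dv + cc * dx) * / mm^2 + dx * (2 * cc / mm^2))); [lra|].
  unfold LL. assert (0 <= dx) by apply Rabs_pos. assert (0 <= dv) by apply Rabs_pos.
  assert (0 <= nu * dx / mm^2) by (apply Rdiv_le_0_compat; nra).
  replace (2 * kappa * (dx / mm^2) + eps^2 * (dx * (3 / mm^4)) +
     nu * ((dv + cc * dx) * / mm^2 + dx * (2 * cc / mm^2))) with
    ((2 * kappa / mm ^ 2 + 3 * eps ^ 2 / mm ^ 4 + nu * (3 * cc) / mm ^ 2) * dx + (nu / mm^2) * dv)
    by (field; lra).
  assert (0 <= 2 * kappa / mm ^ 2) by (apply Rdiv_le_0_compat; nra).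
  assert (0 <= 3 * eps ^ 2 / mm ^ 4) by (apply Rdiv_le_0_compat; [nra|apply pow_lt; lra]).
  assert (0 <= nu / mm ^ 2) by (apply Rdiv_le_0_compat; nra).
  assert (nu * (1 + 3 * cc) / mm ^ 2 = nu / mm^2 + nu * (3 * cc) / mm ^ 2) by (field; lra).
  assert (0 <= nu * (3 * cc) / mm ^ 2) by (apply Rdiv_le_0_compat; nra).
  nra.
Qed.

End Model.

Lemma normR (x : R) : norm x = Rabs x.
Proof. reflexivity. Qed.

Lemma exd_cont (f : R -> R) x : ex_derive f x -> continuous f x.
Proof. intros H. exact (ex_derive_continuous f x H). Qed.

Lemma RInt_correctR (f : R -> R) a b : ex_RInt f a b -> is_RInt f a b (RInt f a b).
Proof. intros H. exact (RInt_correct f a b H). Qed.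

Lemma ex_RInt_contR (f : R -> R) a b : (forall s, continuous f s) -> ex_RInt f a b.
Proof. intros H. apply (ex_RInt_continuous f a b). intros; apply H. Qed.

Lemma cont_exp_lin (M K : R) x : continuous (fun s => M * exp (K * s)) x.
Proof. apply exd_cont. auto_derive. auto. Qed.

Lemma int_bound (f : R -> R) (M K t : R) : 0 < K -> 0 <= M ->
  (forall s, continuous f s) -> (forall s, Rabs (f s) <= M * exp (K * Rabs s)) ->
  Rabs (RInt f 0 t) <= M / K * exp (K * Rabs t).
Proof.
  intros HK HM Hc Hb.
  assert (Hpos : forall y, 0 <= M / K * exp y).
  { intros y. apply Rmult_le_pos; [apply Rdiv_le_0_compat; lra| apply Rlt_le, exp_pos]. }
  destruct (Rle_dec 0 t) as [Ht|Ht].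
  - assert (Hi : is_RInt (fun s => M * exp (K * s)) 0 t
                   (minus (M / K * exp (K * t)) (M / K * exp (K * 0)))).
    { apply (is_RInt_derive (fun s => M / K * exp (K * s))).
      - intros x _. auto_derive; auto. field. lra.
      - intros x _. apply cont_exp_lin. }
    pose proof (norm_RInt_le f (fun s => M * exp (K * s)) 0 t (RInt f 0 t) (minus (M / K * exp (K * t)) (M / K * exp (K * 0))) Ht) as H.
    rewrite normR in H. rewrite (Rabs_pos_eq t) by lra.
    assert (H1 : forall x, 0 <= x <= t -> norm (f x) <= M * exp (K * x)).
    { intros x Hx. rewrite normR. rewrite <- (Rabs_pos_eq x) at 2 by lra. auto. }
    assert (H2 : is_RInt f 0 t (RInt f 0 t)).
    { apply RInt_correctR, ex_RInt_contR. auto. }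
    specialize (H H1 H2 Hi).
    unfold minus, plus, opp in H; simpl in H. rewrite Rmult_0_r, exp_0 in H.
    assert (0 <= M / K * 1) by (apply Rmult_le_pos; [apply Rdiv_le_0_compat; lra| lra]). lra.
  - assert (Hi : is_RInt (fun s => M * exp (- K * s)) t 0
                   (minus (- (M / K) * exp (- K * 0)) (- (M / K) * exp (- K * t)))).
    { apply (is_RInt_derive (fun s => - (M / K) * exp (- K * s))).
      - intros x _. auto_derive; auto. field. lra.
      - intros x _. apply cont_exp_lin. }
    assert (Hex : ex_RInt f t 0) by (apply ex_RInt_contR; auto).
    rewrite <- (opp_RInt_swap f t 0) by auto.
    change (Rabs (- RInt f t 0) <= M / K * exp (K * Rabs t)).
    rewrite Rabs_Ropp.
    pose proof (norm_RInt_le f (fun s => M * exp (- K * s)) t 0 (RInt f t 0) (minus (- (M / K) * exp (- K * 0)) (- (M / K) * exp (- K * t))) ltac:(lra)) as H.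
    rewrite normR in H. rewrite (Rabs_left t) by lra.
    assert (H1 : forall x, t <= x <= 0 -> norm (f x) <= M * exp (- K * x)).
    { intros x Hx. rewrite normR. replace (- K * x) with (K * Rabs x). auto.
      rewrite Rabs_left1 by lra. ring. }
    assert (H2 : is_RInt f t 0 (RInt f t 0)) by (apply RInt_correctR; auto).
    specialize (H H1 H2 Hi).
    unfold minus, plus, opp in H; simpl in H. rewrite Rmult_0_r, exp_0 in H.
    replace (K * - t) with (- K * t) by ring.
    assert (0 <= M / K * 1) by (apply Rmult_le_pos; [apply Rdiv_le_0_compat; lra| lra]). lra.
Qed.

Lemma RInt_minusR (f g : R -> R) a b : ex_RInt f a b -> ex_RInt g a b ->
  RInt f a b - RInt g a b = RInt (fun s => f s - g s) a b.
Proof. intros H1 H2. symmetry. exact (RInt_minus f g a b H1 H2). Qed.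

Lemma deriv_int (f : R -> R) c : (forall t, continuous f t) ->
  forall t, is_derive (fun t => c + RInt f 0 t) t (f t).
Proof.
  intros Hc t.
  assert (H : is_derive (fun t => RInt f 0 t) t (f t)).
  { apply (is_derive_RInt f (fun t => RInt f 0 t) 0 t).
    - apply filter_forall. intros; apply RInt_correctR, ex_RInt_contR; auto.
    - auto. }
  pose proof (is_derive_plus (fun _ => c) _ t 0 (f t) (is_derive_const c t) H) as H'.
  assert (E : f t = plus zero (f t)) by (unfold plus, zero; simpl; ring).
  rewrite E. exact H'.
Qed.

Section Picard.
Variables (G : R -> R -> R) (L a b : R).
Hypothesis HL : 0 <= L.
Hypothesis Hlip : forall x1 v1 x2 v2,
  Rabs (G x1 v1 - G x2 v2) <= L * (Rabs (x1 - x2) + Rabs (v1 - v2)).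

Lemma G_cont (x v : R -> R) t : continuous x t -> continuous v t ->
  continuous (fun s => G (x s) (v s)) t.
Proof.
  intros Hx Hv. apply filterlim_locally. intros eps.
  assert (He : 0 < eps / (2 * (L + 1))) by (destruct eps; simpl; apply Rdiv_lt_0_compat; lra).
  pose proof (proj1 (filterlim_locally x (x t)) Hx (mkposreal _ He)) as H1.
  pose proof (proj1 (filterlim_locally v (v t)) Hv (mkposreal _ He)) as H2.
  generalize (filter_and _ _ H1 H2). apply filter_imp. intros s [B1 B2].
  apply ball_abs in B1. apply ball_abs in B2. apply abs_ball. simpl in *.
  eapply Rle_lt_trans. apply Hlip.
  set (e := eps / (2 * (L + 1))) in *.
  assert (E : 2 * e * (L + 1) = eps) by (unfold e; field; lra).
  assert (He' : 0 < e) by exact He.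
  assert (H3 : L * (Rabs (x s - x t) + Rabs (v s - v t)) <= L * (2 * e)) by (apply Rmult_le_compat_l; lra).
  clearbody e. destruct eps as [eps Hep]; simpl in *. nra.
Qed.

Fixpoint pic (n : nat) : (R -> R) * (R -> R) :=
  match n with
  | O => (fun _ => a, fun _ => b)
  | S n => (fun t => a + RInt (snd (pic n)) 0 t,
            fun t => b + RInt (fun s => G (fst (pic n) s) (snd (pic n) s)) 0 t)
  end.

Lemma pic_S_fst n : fst (pic (S n)) = fun t => a + RInt (snd (pic n)) 0 t.
Proof. reflexivity. Qed.
Lemma pic_S_snd n : snd (pic (S n)) = fun t => b + RInt (fun s => G (fst (pic n) s) (snd (pic n) s)) 0 t.
Proof. reflexivity. Qed.

Lemma pic_cont n : (forall t, continuous (fst (pic n)) t) /\ (forall t, continuous (snd (pic n)) t).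
Proof.
  induction n as [|n [IH1 IH2]].
  - split; intros t; simpl; apply continuous_const.
  - rewrite pic_S_fst, pic_S_snd. split; intros t; apply exd_cont; eexists; apply deriv_int.
    + exact IH2.
    + intros s. apply G_cont; auto.
Qed.

Lemma pic_deriv n t : is_derive (fst (pic (S n))) t (snd (pic n) t) /\
  is_derive (snd (pic (S n))) t (G (fst (pic n) t) (snd (pic n) t)).
Proof.
  destruct (pic_cont n) as [H1 H2]. rewrite pic_S_fst, pic_S_snd. split.
  - apply deriv_int. auto.
  - apply (deriv_int (fun s => G (fst (pic n) s) (snd (pic n) s))). intros; apply G_cont; auto.
Qed.

Lemma pic_0 n : fst (pic n) 0 = a /\ snd (pic n) 0 = b.
Proof.
  destruct n; [simpl; auto|]. rewrite pic_S_fst, pic_S_snd. rewrite !RInt_point.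
  unfold zero; simpl. split; ring.
Qed.

Definition KK := 2 * (1 + L).
Definition AA := (Rabs b + Rabs (G a b)) / KK.

Lemma KK_pos : 0 < KK.
Proof. unfold KK; lra. Qed.
Lemma AA_nonneg : 0 <= AA.
Proof. unfold AA. apply Rdiv_le_0_compat; [|apply KK_pos]. pose proof (Rabs_pos b); pose proof (Rabs_pos (G a b)); lra. Qed.

Lemma pic_bound n t :
  Rabs (fst (pic (S n)) t - fst (pic n) t) + Rabs (snd (pic (S n)) t - snd (pic n) t)
  <= AA * (/2)^n * exp (KK * Rabs t).
Proof.
  pose proof KK_pos as HK. pose proof AA_nonneg as HA.
  revert t. induction n as [|n IH]; intros t.
  - rewrite pic_S_fst, pic_S_snd. simpl. rewrite !RInt_const.
    unfold scal; simpl; unfold mult; simpl.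
    replace (a + (t - 0) * b - a) with (t * b) by ring.
    replace (b + (t - 0) * G a b - b) with (t * G a b) by ring.
    rewrite !Rabs_mult.
    pose proof (exp_ineq1_le (KK * Rabs t)).
    assert (Rabs t <= exp (KK * Rabs t) / KK).
    { apply (Rmult_le_reg_r KK); auto. replace (exp (KK * Rabs t) / KK * KK) with (exp (KK * Rabs t)) by (field; lra).
      pose proof (Rabs_pos t). nra. }
    unfold AA. replace ((Rabs b + Rabs (G a b)) / KK * 1 * exp (KK * Rabs t)) with
      ((Rabs b + Rabs (G a b)) * (exp (KK * Rabs t) / KK)) by (field; lra).
    pose proof (Rabs_pos b); pose proof (Rabs_pos (G a b)). pose proof (Rabs_pos t). nra.
  - destruct (pic_cont n) as [Cx Cv]. destruct (pic_cont (S n)) as [Cx' Cv'].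
    assert (Ev : fst (pic (S (S n))) t - fst (pic (S n)) t =
                 RInt (fun s => snd (pic (S n)) s - snd (pic n) s) 0 t).
    { rewrite (pic_S_fst (S n)), (pic_S_fst n).
      rewrite <- RInt_minusR by (apply ex_RInt_contR; auto). ring. }
    assert (Eg : snd (pic (S (S n))) t - snd (pic (S n)) t =
                 RInt (fun s => G (fst (pic (S n)) s) (snd (pic (S n)) s) - G (fst (pic n) s) (snd (pic n) s)) 0 t).
    { rewrite (pic_S_snd (S n)), (pic_S_snd n).
      rewrite <- RInt_minusR by (apply ex_RInt_contR; intros; apply G_cont; auto). ring. }
    rewrite Ev, Eg.
    assert (B1 : Rabs (RInt (fun s => snd (pic (S n)) s - snd (pic n) s) 0 t)
                 <= AA * (/2)^n / KK * exp (KK * Rabs t)).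
    { apply int_bound; auto.
      - apply Rmult_le_pos; auto. apply pow_le; lra.
      - intros s. apply (continuous_minus (V := R_NormedModule)); auto.
      - intros s. specialize (IH s). pose proof (Rabs_pos (fst (pic (S n)) s - fst (pic n) s)). lra. }
    assert (B2 : Rabs (RInt (fun s => G (fst (pic (S n)) s) (snd (pic (S n)) s) - G (fst (pic n) s) (snd (pic n) s)) 0 t)
                 <= L * (AA * (/2)^n) / KK * exp (KK * Rabs t)).
    { apply int_bound; auto.
      - apply Rmult_le_pos; auto. apply Rmult_le_pos; auto. apply pow_le; lra.
      - intros s. apply (continuous_minus (V := R_NormedModule)); apply G_cont; auto.
      - intros s. specialize (IH s). eapply Rle_trans. apply Hlip.
        rewrite Rmult_assoc. apply Rmult_le_compat_l; auto. }
    replace (AA * (/ 2) ^ S n * exp (KK * Rabs t)) with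
      (AA * (/2)^n / KK * exp (KK * Rabs t) + L * (AA * (/2)^n) / KK * exp (KK * Rabs t)).
    + lra.
    + unfold KK. simpl. field. lra.
Qed.

End Picard.

Lemma lim_le_bound (u : nat -> R) l c B n : Un_cv u l ->
  (forall p, (n <= p)%nat -> Rabs (u p - c) <= B) -> Rabs (l - c) <= B.
Proof.
  intros Hu Hb. destruct (Rle_dec (Rabs (l - c)) B) as [|Hn]; auto. exfalso.
  destruct (Hu (Rabs (l - c) - B)) as [N HN]; [lra|].
  specialize (HN (max N n) (Nat.le_max_l _ _)). specialize (Hb (max N n) (Nat.le_max_r _ _)).
  unfold R_dist in HN.
  pose proof (Rabs_triang (l - u (max N n)) (u (max N n) - c)).
  replace (l - u (max N n) + (u (max N n) - c)) with (l - c) in H by ring.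
  rewrite Rabs_minus_sym in HN. lra.
Qed.

Lemma half_pow_small (y : R) : 0 < y -> exists N, forall n, (N <= n)%nat -> (/2)^n < y.
Proof.
  intros Hy. destruct (pow_lt_1_zero (/2)) with y as [N HN]; auto.
  { rewrite Rabs_pos_eq; lra. }
  exists N. intros n Hn. specialize (HN n Hn). rewrite Rabs_pos_eq in HN; auto.
  apply pow_le; lra.
Qed.

Lemma Un_cv_of_bound (u : nat -> R) l C : 0 <= C -> (forall n, Rabs (l - u n) <= C * (/2)^n) -> Un_cv u l.
Proof.
  intros HC Hb eps He. destruct (half_pow_small (eps / (C + 1))) as [N HN].
  { apply Rdiv_lt_0_compat; lra. }
  exists N. intros n Hn. unfold R_dist. rewrite Rabs_minus_sym.
  specialize (HN n Hn). specialize (Hb n).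
  assert (C * (/2)^n <= C * (eps / (C+1))) by (apply Rmult_le_compat_l; lra).
  assert (C * (eps / (C + 1)) < eps).
  { apply (Rmult_lt_reg_r (C+1)); [lra|]. replace (C * (eps / (C + 1)) * (C + 1)) with (C * eps) by (field; lra). nra. }
  lra.
Qed.

Lemma CVU_of_bound (fn : nat -> R -> R) f c r C : 0 <= C ->
  (forall n y, Boule c r y -> Rabs (f y - fn n y) <= C * (/2)^n) -> CVU fn f c r.
Proof.
  intros HC Hb eps He. destruct (half_pow_small (eps / (C + 1))) as [N HN].
  { apply Rdiv_lt_0_compat; lra. }
  exists N. intros n y Hn Hy.
  specialize (HN n Hn). specialize (Hb n y Hy).
  assert (C * (/2)^n <= C * (eps / (C+1))) by (apply Rmult_le_compat_l; lra).
  assert (C * (eps / (C + 1)) < eps).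
  { apply (Rmult_lt_reg_r (C+1)); [lra|]. replace (C * (eps / (C + 1)) * (C + 1)) with (C * eps) by (field; lra). nra. }
  lra.
Qed.

Section PicLim.
Variables (G : R -> R -> R) (L a b : R).
Hypothesis HL : 0 <= L.
Hypothesis Hlip : forall x1 v1 x2 v2,
  Rabs (G x1 v1 - G x2 v2) <= L * (Rabs (x1 - x2) + Rabs (v1 - v2)).

Let xs n := fst (pic G a b n).
Let vs n := snd (pic G a b n).
Let K := KK L.
Let A := AA G L a b.

Lemma pic_cauchy n k t :
  Rabs (xs (n + k)%nat t - xs n t) + Rabs (vs (n + k)%nat t - vs n t)
  <= 2 * A * exp (K * Rabs t) * ((/2)^n - (/2)^(n+k)).
Proof.
  induction k as [|k IH].
  - rewrite Nat.add_0_r. unfold Rminus. rewrite !Rplus_opp_r, Rabs_R0. lra.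
  - rewrite Nat.add_succ_r.
    pose proof (pic_bound G L a b HL Hlip (n + k) t) as Hb. fold K A in Hb.
    unfold xs, vs in *.
    pose proof (Rabs_triang (fst (pic G a b (S (n + k))) t - fst (pic G a b (n + k)) t)
                            (fst (pic G a b (n + k)) t - fst (pic G a b n) t)).
    pose proof (Rabs_triang (snd (pic G a b (S (n + k))) t - snd (pic G a b (n + k)) t)
                            (snd (pic G a b (n + k)) t - snd (pic G a b n) t)).
    replace (fst (pic G a b (S (n + k))) t - fst (pic G a b (n + k)) t +
             (fst (pic G a b (n + k)) t - fst (pic G a b n) t))
      with (fst (pic G a b (S (n + k))) t - fst (pic G a b n) t) in H by ring.
    replace (snd (pic G a b (S (n + k))) t - snd (pic G a b (n + k)) t +
             (snd (pic G a b (n + k)) t - snd (pic G a b n) t))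
      with (snd (pic G a b (S (n + k))) t - snd (pic G a b n) t) in H0 by ring.
    replace (2 * A * exp (K * Rabs t) * ((/ 2) ^ n - (/ 2) ^ S (n + k))) with
      (2 * A * exp (K * Rabs t) * ((/ 2) ^ n - (/ 2) ^ (n + k)) + A * (/ 2) ^ (n + k) * exp (K * Rabs t))
      by (simpl; field).
    lra.
Qed.

Lemma pic_cauchy' n p t : (n <= p)%nat ->
  Rabs (xs p t - xs n t) <= 2 * A * exp (K * Rabs t) * (/2)^n /\
  Rabs (vs p t - vs n t) <= 2 * A * exp (K * Rabs t) * (/2)^n.
Proof.
  intros Hnp. replace p with (n + (p - n))%nat by lia.
  pose proof (pic_cauchy n (p - n) t).
  pose proof (Rabs_pos (xs (n + (p - n))%nat t - xs n t)).
  pose proof (Rabs_pos (vs (n + (p - n))%nat t - vs n t)).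
  assert (0 <= 2 * A * exp (K * Rabs t) * (/2)^(n + (p - n))).
  { pose proof (AA_nonneg G L a b HL). fold A in H2. apply Rmult_le_pos; [|apply pow_le; lra].
    apply Rmult_le_pos; [lra|apply Rlt_le, exp_pos]. }
  split; nra.
Qed.


Lemma pic_ex_lim (sel : nat -> R -> R) t :
  (forall n p, (n <= p)%nat -> Rabs (sel p t - sel n t) <= 2 * A * exp (K * Rabs t) * (/2)^n) ->
  ex_finite_lim_seq (fun n => sel n t).
Proof.
  intros Hb. apply ex_lim_seq_cauchy_corr. intros eps.
  set (C := 2 * A * exp (K * Rabs t)).
  assert (HC : 0 <= C).
  { pose proof (AA_nonneg G L a b HL). fold A in H. unfold C. apply Rmult_le_pos; [lra|apply Rlt_le, exp_pos]. }
  destruct (half_pow_small (eps / (2 * C + 1))) as [N HN].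
  { apply Rdiv_lt_0_compat; [apply cond_pos| lra]. }
  exists N. intros n m Hn Hm.
  pose proof (Hb N n Hn). pose proof (Hb N m Hm). specialize (HN N (le_n N)).
  pose proof (Rabs_triang (sel n t - sel N t) (sel N t - sel m t)).
  replace (sel n t - sel N t + (sel N t - sel m t)) with (sel n t - sel m t) in H1 by ring.
  rewrite (Rabs_minus_sym (sel N t)) in H1.
  assert (2 * C * (/2)^N <= 2 * C * (eps / (2 * C + 1))) by (apply Rmult_le_compat_l; lra).
  assert (2 * C * (eps / (2 * C + 1)) < eps).
  { destruct eps as [e He]; simpl in *.
    apply (Rmult_lt_reg_r (2 * C + 1)); [lra|].
    replace (2 * C * (e / (2 * C + 1)) * (2 * C + 1)) with (2 * C * e) by (field; lra). nra. }
  unfold C in *. lra.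
Qed.

Definition xl t := real (Lim_seq (fun n => xs n t)).
Definition vl t := real (Lim_seq (fun n => vs n t)).

Lemma xl_cv t : Un_cv (fun n => xs n t) (xl t).
Proof.
  apply is_lim_seq_Reals. unfold xl.
  assert (H : ex_finite_lim_seq (fun n => xs n t)).
  { apply pic_ex_lim. intros n p Hnp. apply (pic_cauchy' n p t Hnp). }
  destruct H as [l Hl]. rewrite (is_lim_seq_unique _ _ Hl). simpl. auto.
Qed.

Lemma vl_cv t : Un_cv (fun n => vs n t) (vl t).
Proof.
  apply is_lim_seq_Reals. unfold vl.
  assert (H : ex_finite_lim_seq (fun n => vs n t)).
  { apply pic_ex_lim. intros n p Hnp. apply (pic_cauchy' n p t Hnp). }
  destruct H as [l Hl]. rewrite (is_lim_seq_unique _ _ Hl). simpl. auto.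
Qed.

Lemma xl_bound n t : Rabs (xl t - xs n t) <= 2 * A * exp (K * Rabs t) * (/2)^n.
Proof. apply (lim_le_bound (fun p => xs p t) _ _ _ n (xl_cv t)). intros p Hp. apply (pic_cauchy' n p t Hp). Qed.

Lemma vl_bound n t : Rabs (vl t - vs n t) <= 2 * A * exp (K * Rabs t) * (/2)^n.
Proof. apply (lim_le_bound (fun p => vs p t) _ _ _ n (vl_cv t)). intros p Hp. apply (pic_cauchy' n p t Hp). Qed.

Lemma exp_ball_bound c (r : posreal) y : Boule c r y -> exp (K * Rabs y) <= exp (K * (Rabs c + r)).
Proof.
  intros Hy. unfold Boule in Hy. apply exp_le. apply Rmult_le_compat_l.
  - unfold K, KK; lra.
  - pose proof (Rabs_triang (y - c) c). replace (y - c + c) with y in H by ring. lra.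
Qed.

Lemma A_nonneg : 0 <= A.
Proof. exact (AA_nonneg G L a b HL). Qed.

Lemma vs_CVU c r : CVU vs vl c r.
Proof.
  apply CVU_of_bound with (C := 2 * A * exp (K * (Rabs c + r))).
  - pose proof A_nonneg. apply Rmult_le_pos; [lra|apply Rlt_le, exp_pos].
  - intros n y Hy. eapply Rle_trans. apply vl_bound.
    pose proof (exp_ball_bound c r y Hy). pose proof A_nonneg.
    assert (0 <= (/2)^n) by (apply pow_le; lra).
    apply Rmult_le_compat_r; [auto|]. apply Rmult_le_compat_l; [lra|auto].
Qed.

Lemma Gs_CVU c r : CVU (fun n y => G (xs n y) (vs n y)) (fun y => G (xl y) (vl y)) c r.
Proof.
  apply CVU_of_bound with (C := L * (4 * A * exp (K * (Rabs c + r)))).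
  - pose proof A_nonneg. apply Rmult_le_pos; auto. apply Rmult_le_pos; [lra|apply Rlt_le, exp_pos].
  - intros n y Hy. eapply Rle_trans. apply Hlip.
    pose proof (xl_bound n y). pose proof (vl_bound n y).
    pose proof (exp_ball_bound c r y Hy). pose proof A_nonneg.
    assert (0 <= (/2)^n) by (apply pow_le; lra).
    assert (2 * A * exp (K * Rabs y) * (/2)^n <= 2 * A * exp (K * (Rabs c + r)) * (/2)^n).
    { apply Rmult_le_compat_r; [auto|]. apply Rmult_le_compat_l; [lra|auto]. }
    assert (Rabs (xl y - xs n y) + Rabs (vl y - vs n y) <= 4 * A * exp (K * (Rabs c + r)) * (/2)^n) by lra.
    rewrite Rmult_assoc. apply Rmult_le_compat_l; auto.
Qed.

Lemma xs_S_cv t : Un_cv (fun n => xs (S n) t) (xl t).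
Proof.
  apply Un_cv_of_bound with (C := 2 * A * exp (K * Rabs t)).
  - pose proof A_nonneg. apply Rmult_le_pos; [lra|apply Rlt_le, exp_pos].
  - intros n. eapply Rle_trans. apply xl_bound. simpl.
    pose proof A_nonneg. assert (0 <= (/2)^n) by (apply pow_le; lra).
    assert (0 <= 2 * A * exp (K * Rabs t)) by (apply Rmult_le_pos; [lra|apply Rlt_le, exp_pos]). nra.
Qed.

Lemma vs_S_cv t : Un_cv (fun n => vs (S n) t) (vl t).
Proof.
  apply Un_cv_of_bound with (C := 2 * A * exp (K * Rabs t)).
  - pose proof A_nonneg. apply Rmult_le_pos; [lra|apply Rlt_le, exp_pos].
  - intros n. eapply Rle_trans. apply vl_bound. simpl.
    pose proof A_nonneg. assert (0 <= (/2)^n) by (apply pow_le; lra).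
    assert (0 <= 2 * A * exp (K * Rabs t)) by (apply Rmult_le_pos; [lra|apply Rlt_le, exp_pos]). nra.
Qed.

Let r1 := mkposreal 1 Rlt_0_1.

Lemma Boule_center t : Boule t r1 t.
Proof. unfold Boule. simpl. rewrite Rminus_eq_0, Rabs_R0. lra. Qed.

Lemma vl_cont t : continuity_pt vl t.
Proof.
  apply (CVU_continuity vs vl t r1 (vs_CVU t r1)); [|apply Boule_center].
  intros n y _. apply continuity_pt_filterlim. apply (pic_cont G L a b HL Hlip n).
Qed.

Lemma Gl_cont t : continuity_pt (fun y => G (xl y) (vl y)) t.
Proof.
  apply (CVU_continuity _ _ t r1 (Gs_CVU t r1)); [|apply Boule_center].
  intros n y _. apply continuity_pt_filterlim. destruct (pic_cont G L a b HL Hlip n).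
  apply G_cont with (L := L); auto.
Qed.

Lemma xl_deriv t : derivable_pt_lim xl t (vl t).
Proof.
  apply (derivable_pt_lim_CVU (fun n => xs (S n)) vs xl vl t t r1 (Boule_center t)).
  - intros y n _. apply is_derive_Reals. apply (pic_deriv G L a b HL Hlip n y).
  - intros y _. apply xs_S_cv.
  - apply vs_CVU.
  - intros y _. apply vl_cont.
Qed.

Lemma vl_deriv t : derivable_pt_lim vl t (G (xl t) (vl t)).
Proof.
  apply (derivable_pt_lim_CVU (fun n => vs (S n)) (fun n y => G (xs n y) (vs n y)) vl
           (fun y => G (xl y) (vl y)) t t r1 (Boule_center t)).
  - intros y n _. apply is_derive_Reals. apply (pic_deriv G L a b HL Hlip n y).
  - intros y _. apply vs_S_cv.
  - apply Gs_CVU.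
  - intros y _. apply Gl_cont.
Qed.

Lemma xl_0 : xl 0 = a.
Proof.
  assert (H : Un_cv (fun n => xs n 0) a).
  { intros e He. exists O. intros n _. unfold R_dist. unfold xs. rewrite (proj1 (pic_0 G a b n)).
    rewrite Rminus_eq_0, Rabs_R0. auto. }
  apply (UL_sequence _ _ _ (xl_cv 0) H).
Qed.

Lemma vl_0 : vl 0 = b.
Proof.
  assert (H : Un_cv (fun n => vs n 0) b).
  { intros e He. exists O. intros n _. unfold R_dist. unfold vs. rewrite (proj2 (pic_0 G a b n)).
    rewrite Rminus_eq_0, Rabs_R0. auto. }
  apply (UL_sequence _ _ _ (vl_cv 0) H).
Qed.

End PicLim.

Definition tends (f : R -> R) (l : R) := forall e, 0 < e -> exists M, forall t, M < t -> Rabs (f t - l) < e.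
Definition ev (P : R -> Prop) := exists M, forall t, M < t -> P t.

Lemma tends_is_lim f (l : R) : tends f l -> is_lim f p_infty l.
Proof.
  intros H. unfold is_lim. simpl. apply filterlim_locally. intros eps.
  destruct (H eps (cond_pos eps)) as [M HM]. exists M. intros t Ht. apply abs_ball. auto.
Qed.

Lemma is_lim_tends f (l : R) : is_lim f p_infty l -> tends f l.
Proof.
  intros H e He. unfold is_lim in H. simpl in H.
  destruct (proj1 (filterlim_locally f l) H (mkposreal e He)) as [M HM].
  exists M. intros t Ht. apply ball_abs. apply HM; auto.
Qed.

Lemma ev_and P Q : ev P -> ev Q -> ev (fun t => P t /\ Q t).
Proof.
  intros [M1 H1] [M2 H2]. exists (Rmax M1 M2). intros t Ht.
  pose proof (Rmax_l M1 M2). pose proof (Rmax_r M1 M2). split; [apply H1|apply H2]; lra.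
Qed.

Lemma ev_imp (P Q : R -> Prop) : ev P -> (forall t, P t -> Q t) -> ev Q.
Proof. intros [M H] Himp. exists M. intros t Ht. auto. Qed.

Lemma ev_gt c : ev (fun t => c < t).
Proof. exists c. auto. Qed.

Lemma tends_ext f g l : ev (fun t => f t = g t) -> tends f l -> tends g l.
Proof.
  intros [M1 H1] H e He. destruct (H e He) as [M2 H2]. exists (Rmax M1 M2). intros t Ht.
  pose proof (Rmax_l M1 M2). pose proof (Rmax_r M1 M2). rewrite <- H1 by lra. apply H2. lra.
Qed.

Lemma tends_bound f g l : ev (fun t => Rabs (f t - l) <= g t) -> tends g 0 -> tends f l.
Proof.
  intros [M1 H1] H e He. destruct (H e He) as [M2 H2]. exists (Rmax M1 M2). intros t Ht.
  pose proof (Rmax_l M1 M2). pose proof (Rmax_r M1 M2).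
  specialize (H1 t ltac:(lra)). specialize (H2 t ltac:(lra)). rewrite Rminus_0_r in H2.
  pose proof (Rle_abs (g t)). lra.
Qed.

Definition tinf (f : R -> R) := forall A, ev (fun t => A < f t).

Lemma tends_inv_inf f : tinf f -> tends (fun t => / f t) 0.
Proof.
  intros H e He. destruct (H (/ e)) as [M HM]. exists M. intros t Ht. specialize (HM t Ht).
  assert (0 < / e) by (apply Rinv_0_lt_compat; lra).
  rewrite Rminus_0_r, Rabs_pos_eq by (apply Rlt_le, Rinv_0_lt_compat; lra).
  rewrite <- (Rinv_inv e). apply Rinv_lt_contravar; auto. nra.
Qed.

Lemma tends_plus f g a b : tends f a -> tends g b -> tends (fun t => f t + g t) (a + b).
Proof.
  intros H1 H2. apply is_lim_tends.
  apply (is_lim_plus f g p_infty a b (a + b)); try apply tends_is_lim; auto. simpl. reflexivity.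
Qed.

Lemma tends_mult f g a b : tends f a -> tends g b -> tends (fun t => f t * g t) (a * b).
Proof.
  intros H1 H2. apply is_lim_tends.
  apply (is_lim_mult f g p_infty a b); try apply tends_is_lim; auto. simpl. auto.
Qed.

Lemma tends_const c : tends (fun _ => c) c.
Proof. intros e He. exists 0. intros. rewrite Rminus_eq_0, Rabs_R0. auto. Qed.

Lemma tends_scal c f a : tends f a -> tends (fun t => c * f t) (c * a).
Proof. intros H. apply (tends_mult (fun _ => c) f); auto. apply tends_const. Qed.

Lemma tends_inv f a : a <> 0 -> tends f a -> tends (fun t => / f t) (/ a).
Proof.
  intros Ha H. apply is_lim_tends.
  apply (is_lim_inv f p_infty a); [apply tends_is_lim; auto|]. intros E. injection E. auto.
Qed.

Lemma sqrt_near1 y : 0 <= y -> Rabs (sqrt y - 1) <= Rabs (y - 1).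
Proof.
  intros Hy. pose proof (sqrt_pos y). pose proof (sqrt_sqrt y Hy).
  replace (y - 1) with ((sqrt y - 1) * (sqrt y + 1)) by nra.
  rewrite Rabs_mult. rewrite (Rabs_pos_eq (sqrt y + 1)) by lra.
  pose proof (Rabs_pos (sqrt y - 1)). nra.
Qed.

Lemma tends_sqrt1 f : ev (fun t => 0 <= f t) -> tends f 1 -> tends (fun t => sqrt (f t)) 1.
Proof.
  intros Hp H. apply (tends_bound _ (fun t => Rabs (f t - 1))).
  - apply (ev_imp _ _ Hp). intros t Ht. apply sqrt_near1; auto.
  - intros e He. destruct (H e He) as [M HM]. exists M. intros t Ht. rewrite Rminus_0_r, Rabs_Rabsolu. auto.
Qed.

Lemma cesaro (f df : R -> R) T l : (forall t, T < t -> is_derive f t (df t)) -> tends df l ->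
  tends (fun t => f t / t) l.
Proof.
  intros Hd Hl e He.
  destruct (Hl (e/2) ltac:(lra)) as [M1 HM1].
  set (a := Rmax (Rmax M1 T) 0). set (s := a + 1).
  assert (Ha1 : M1 <= a) by (unfold a; eapply Rle_trans; [apply Rmax_l|apply Rmax_l]).
  assert (Ha2 : T <= a) by (unfold a; eapply Rle_trans; [apply Rmax_r|apply Rmax_l]).
  assert (Ha3 : 0 <= a) by (unfold a; apply Rmax_r).
  assert (Hup : forall t, s <= t -> f t - f s <= (l + e/2) * (t - s)).
  { intros t Ht.
    assert (H := incr_on (fun t => (l + e/2) * t - f t) (fun t => (l + e/2) - df t) a).
    assert ((l + e / 2) * s - f s <= (l + e / 2) * t - f t); [|lra].
    apply H; [| |unfold s; lra|lra].
    - intros x Hx. apply (is_derive_minus (fun t => (l + e/2) * t) f x (l + e/2) (df x)).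
      + auto_derive; auto; ring.
      + apply Hd. lra.
    - intros x Hx. specialize (HM1 x ltac:(lra)). apply Rabs_def2 in HM1. lra. }
  assert (Hlo : forall t, s <= t -> (l - e/2) * (t - s) <= f t - f s).
  { intros t Ht.
    assert (H := incr_on (fun t => f t - (l - e/2) * t) (fun t => df t - (l - e/2)) a).
    assert (f s - (l - e / 2) * s <= f t - (l - e / 2) * t); [|lra].
    apply H; [| |unfold s; lra|lra].
    - intros x Hx. apply (is_derive_minus f (fun t => (l - e/2) * t) x (df x) (l - e/2)).
      + apply Hd. lra.
      + auto_derive; auto; ring.
    - intros x Hx. specialize (HM1 x ltac:(lra)). apply Rabs_def2 in HM1. lra. }
  set (K := Rabs (f s - l * s)).
  exists (Rmax s (2 * K / e + 1)). intros t Ht.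
  pose proof (Rmax_l s (2 * K / e + 1)). pose proof (Rmax_r s (2 * K / e + 1)).
  assert (Hts : s <= t) by lra. assert (Ht0 : 0 < t) by (unfold s in *; lra).
  specialize (Hup t Hts). specialize (Hlo t Hts).
  replace (f t / t - l) with ((f s - l * s) / t + (f t - f s - l * (t - s)) / t) by (field; lra).
  assert (HK : K / t < e / 2).
  { apply (Rmult_lt_reg_r t); auto. replace (K / t * t) with K by (field; lra).
    assert (2 * K / e < t) by lra.
    apply (Rmult_lt_compat_r (e/2)) in H1; [|lra]. replace (2 * K / e * (e / 2)) with K in H1 by (field; lra).
    lra. }
  assert (H2 : Rabs ((f t - f s - l * (t - s)) / t) <= e / 2 * ((t - s) / t)).
  { rewrite Rabs_div by lra. rewrite (Rabs_pos_eq t) by lra.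
    unfold Rdiv. rewrite <- Rmult_assoc. apply Rmult_le_compat_r; [apply Rlt_le, Rinv_0_lt_compat; lra|].
    apply Rabs_le. split; nra. }
  assert ((t - s) / t <= 1).
  { apply (Rmult_le_reg_r t); auto. replace ((t - s) / t * t) with (t - s) by (field; lra). unfold s in *; lra. }
  assert (Rabs ((f s - l * s) / t) = K / t).
  { unfold K. rewrite Rabs_div by lra. rewrite (Rabs_pos_eq t) by lra. auto. }
  pose proof (Rabs_triang ((f s - l * s) / t) ((f t - f s - l * (t - s)) / t)). nra.
Qed.

Lemma energy_deriv (x v P : R -> R) (dP g t : R) : is_derive x t (v t) -> is_derive v t g ->
  is_derive P (x t) dP -> is_derive (fun s => v s ^ 2 / 2 - P (x s)) t (v t * g - dP * v t).
Proof.
  intros Hx Hv HP. auto_derive.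
  - repeat split; eexists; eauto.
  - replace (Derive (fun x0 : R => x x0) t) with (v t) by (symmetry; apply is_derive_unique; auto).
    replace (Derive (fun x0 : R => v x0) t) with g by (symmetry; apply is_derive_unique; auto).
    replace (Derive (fun x0 : R => P x0) (x t)) with dP by (symmetry; apply is_derive_unique; auto).
    field.
Qed.

Lemma glue_deriv (f p1 p2 : R -> R) x0 l :
  (forall y, x0 <= y -> f y = p1 y) -> (forall y, y <= x0 -> f y = p2 y) ->
  derivable_pt_lim p1 x0 l -> derivable_pt_lim p2 x0 l -> derivable_pt_lim f x0 l.
Proof.
  intros H1 H2 D1 D2 e He.
  destruct (D1 e He) as [d1 Hd1]. destruct (D2 e He) as [d2 Hd2].
  assert (Hd : 0 < Rmin d1 d2) by (apply Rmin_pos; apply cond_pos).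
  exists (mkposreal _ Hd). intros h Hh Hhd. simpl in Hhd.
  pose proof (Rmin_l d1 d2). pose proof (Rmin_r d1 d2).
  destruct (Rle_dec 0 h).
  - rewrite (H1 (x0 + h)), (H1 x0) by lra. apply Hd1; auto. lra.
  - rewrite (H2 (x0 + h)), (H2 x0) by lra. apply Hd2; auto. lra.
Qed.

Lemma deriv_loc_eq (f g : R -> R) x0 l (d : posreal) :
  (forall y, Rabs (y - x0) < d -> f y = g y) -> derivable_pt_lim g x0 l -> derivable_pt_lim f x0 l.
Proof.
  intros H D e He. destruct (D e He) as [d1 Hd1].
  assert (Hd : 0 < Rmin d1 d) by (apply Rmin_pos; apply cond_pos).
  exists (mkposreal _ Hd). intros h Hh Hhd. simpl in Hhd.
  pose proof (Rmin_l d1 d). pose proof (Rmin_r d1 d).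
  rewrite (H (x0 + h)), (H x0).
  - apply Hd1; auto. lra.
  - rewrite Rminus_eq_0, Rabs_R0. apply cond_pos.
  - replace (x0 + h - x0) with h by ring. lra.
Qed.

Section Exist.
Variables kappa eps nu alpha beta : R.
Hypotheses (Hk : 0 < kappa) (He : 0 <= eps) (Hn : 0 <= nu) (Ha : 0 < alpha).
Local Set Default Proof Using "Hk He Hn Ha".

Let m := mm kappa eps alpha beta.
Let c := cc kappa eps alpha beta.
Let Gm := G kappa eps nu alpha beta.
Let L := LL kappa eps nu alpha beta.

Lemma m_pos : 0 < m.
Proof. apply mm_pos. Qed.

Lemma L_nonneg : 0 <= L.
Proof.
  unfold L, LL. fold m c. pose proof m_pos. pose proof (cc_ge1 kappa eps alpha beta). fold c in H0.
  assert (0 <= 2 * kappa / m ^ 2) by (apply Rdiv_le_0_compat; nra).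
  assert (0 <= 3 * eps ^ 2 / m ^ 4) by (apply Rdiv_le_0_compat; [nra|apply pow_lt; lra]).
  assert (0 <= nu * (1 + 3 * c) / m ^ 2) by (apply Rdiv_le_0_compat; nra).
  lra.
Qed.

Lemma Gm_lip x1 v1 x2 v2 : Rabs (Gm x1 v1 - Gm x2 v2) <= L * (Rabs (x1 - x2) + Rabs (v1 - v2)).
Proof. apply G_lip; auto. Qed.

Definition xsol := xl Gm alpha beta.
Definition vsol := vl Gm alpha beta.

Lemma xsol_d t : is_derive xsol t (vsol t).
Proof. apply is_derive_Reals. apply (xl_deriv Gm L alpha beta L_nonneg Gm_lip). Qed.
Lemma vsol_d t : is_derive vsol t (Gm (xsol t) (vsol t)).
Proof. apply is_derive_Reals. apply (vl_deriv Gm L alpha beta L_nonneg Gm_lip). Qed.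
Lemma xsol_0 : xsol 0 = alpha.
Proof. apply (xl_0 Gm L alpha beta L_nonneg Gm_lip). Qed.
Lemma vsol_0 : vsol 0 = beta.
Proof. apply (vl_0 Gm L alpha beta L_nonneg Gm_lip). Qed.

Definition fm y := 2*kappa*(/Rmax y m) + eps^2*(/(Rmax y m)^3).

Definition Pm y := if Rle_dec m y then 2*kappa*ln y - eps^2/(2*y^2)
  else (2*kappa*ln m - eps^2/(2*m^2)) + (y - m)*(2*kappa/m + eps^2/m^3).

Definition p1f y := 2*kappa*ln y - eps^2/(2*y^2).
Definition p2f y := (2*kappa*ln m - eps^2/(2*m^2)) + (y - m)*(2*kappa/m + eps^2/m^3).

Lemma p1_deriv y : 0 < y -> derivable_pt_lim p1f y (2*kappa/y + eps^2/y^3).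
Proof.
  intros Hy. apply is_derive_Reals. unfold p1f. auto_derive.
  - repeat split; auto. apply Rgt_not_eq. nra.
  - field. lra.
Qed.

Lemma p2_deriv y : derivable_pt_lim p2f y (2*kappa/m + eps^2/m^3).
Proof.
  pose proof m_pos. apply is_derive_Reals. unfold p2f. auto_derive; auto. field. lra.
Qed.

Lemma Pm_deriv y : is_derive Pm y (fm y).
Proof.
  pose proof m_pos. apply is_derive_Reals. unfold fm.
  destruct (Rtotal_order y m) as [Hlt|[Heq|Hgt]].
  - rewrite Rmax_right by lra.
    replace (2 * kappa * / m + eps ^ 2 * / m ^ 3) with (2*kappa/m + eps^2/m^3) by (unfold Rdiv; ring).
    assert (Hd : 0 < m - y) by lra.
    apply (deriv_loc_eq _ p2f _ _ (mkposreal _ Hd)); [|apply p2_deriv].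
    intros z Hz. simpl in Hz. unfold Pm, p1f, p2f. destruct (Rle_dec m z); auto.
    apply Rabs_def2 in Hz. lra.
  - subst y. rewrite Rmax_right by lra.
    replace (2 * kappa * / m + eps ^ 2 * / m ^ 3) with (2*kappa/m + eps^2/m^3) by (unfold Rdiv; ring).
    apply (glue_deriv _ p1f p2f).
    + intros z Hz. unfold Pm. destruct (Rle_dec m z); [auto|lra].
    + intros z Hz. unfold Pm, p2f, p1f. destruct (Rle_dec m z); [|auto]. assert (z = m) by lra. subst z.
      replace (m - m) with 0 by ring. ring.
    + apply p1_deriv; auto.
    + apply p2_deriv.
  - rewrite Rmax_left by lra.
    replace (2 * kappa * / y + eps ^ 2 * / y ^ 3) with (2*kappa/y + eps^2/y^3) by (unfold Rdiv; ring).
    assert (Hd : 0 < y - m) by lra.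
    apply (deriv_loc_eq _ p1f _ _ (mkposreal _ Hd)); [|apply p1_deriv; lra].
    intros z Hz. simpl in Hz. unfold Pm, p1f, p2f. destruct (Rle_dec m z); auto.
    apply Rabs_def2 in Hz. lra.
Qed.

Definition Em t := vsol t ^ 2 / 2 - Pm (xsol t).

Lemma Em_decr t : 0 <= t -> Em t <= Em 0.
Proof.
  intros Ht.
  apply (decr_on Em (fun t => vsol t * Gm (xsol t) (vsol t) - fm (xsol t) * vsol t) (-1)); [| |lra|lra].
  - intros s _. apply energy_deriv; [apply xsol_d|apply vsol_d|apply Pm_deriv].
  - intros s _. unfold Gm, G. fold m c. fold (fm (xsol s)).
    set (X := Rmax (xsol s) m). set (w := vsol s).
    assert (HX : m <= X) by apply Rmax_r. pose proof m_pos.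
    pose proof (cc_ge1 kappa eps alpha beta). fold c in H0.
    assert (Hs : 0 <= w * clampv c w X) by (apply clamp_sign; nra).
    assert (0 < X^2) by nra.
    replace (w * (fm (xsol s) - nu * (clampv c w X / X ^ 2)) - fm (xsol s) * w)
      with (- (nu * ((w * clampv c w X) / X^2))) by (field; lra).
    assert (0 <= (w * clampv c w X) / X^2) by (apply Rdiv_le_0_compat; lra).
    nra.
Qed.

Lemma Em_0 : Em 0 = E0 kappa eps alpha beta.
Proof.
  unfold Em. rewrite xsol_0, vsol_0. unfold Pm. pose proof (mm_le_alpha kappa eps alpha beta Hk Ha).
  fold m in H. destruct (Rle_dec m alpha); [|lra]. unfold E0. ring.
Qed.

Lemma xsol_region t : 0 <= t -> m <= xsol t /\ Rabs (vsol t) <= c * xsol t.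
Proof.
  intros Ht. pose proof (Em_decr t Ht) as H. rewrite Em_0 in H. unfold Em in H.
  pose proof m_pos.
  assert (Hm : 2 * kappa * ln m = - E0 kappa eps alpha beta).
  { unfold m, mm. rewrite ln_exp. field. lra. }
  assert (H1 : m <= xsol t).
  { unfold Pm in H. destruct (Rle_dec m (xsol t)); auto. exfalso.
    assert (0 <= eps ^ 2 / (2 * m ^ 2)) by (apply Rdiv_le_0_compat; nra).
    assert (0 < 2 * kappa / m + eps ^ 2 / m ^ 3).
    { assert (0 < 2 * kappa / m) by (apply Rdiv_lt_0_compat; lra).
      assert (0 <= eps ^ 2 / m ^ 3) by (apply Rdiv_le_0_compat; [nra|apply pow_lt; lra]). lra. }
    assert ((xsol t - m) * (2 * kappa / m + eps ^ 2 / m ^ 3) < 0).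
    { assert (xsol t - m < 0) by lra. nra. }
    pose proof (pow2_ge_0 (vsol t)). nra. }
  split; auto.
  apply (region_of_energy kappa eps alpha beta Hk); auto.
  unfold Pm in H. destruct (Rle_dec m (xsol t)); [|lra].
  assert (0 <= eps ^ 2 / (2 * xsol t ^ 2)) by (apply Rdiv_le_0_compat; nra).
  lra.
Qed.

End Exist.

Lemma dq_right (f : R -> R) l : derivable_pt_lim f 0 l ->
  filterlim (fun h => (f h - f 0) / h) (at_right 0) (locally l).
Proof.
  intros H. apply filterlim_locally. intros eps.
  destruct (H eps (cond_pos eps)) as [d Hd]. exists d. intros y Hy Hy0.
  apply ball_abs in Hy. apply abs_ball.
  replace y with (0 + y) at 1 by ring. apply Hd; [lra|]. rewrite Rminus_0_r in Hy. auto.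
Qed.

Lemma cont_right (f : R -> R) : continuous f 0 -> filterlim f (at_right 0) (locally (f 0)).
Proof.
  intros H. apply filterlim_locally. intros eps.
  pose proof (proj1 (filterlim_locally f (f 0)) H eps) as H1.
  unfold at_right, within. apply (filter_imp _ _ (fun y Hy _ => Hy) H1).
Qed.

Section ExistThm.
Variables kappa eps nu alpha beta : R.
Hypotheses (Hk : 0 < kappa) (He : 0 <= eps) (Hn : 0 <= nu) (Ha : 0 < alpha).
Local Set Default Proof Using "Hk He Hn Ha".

Let x := xsol kappa eps nu alpha beta.
Let v := vsol kappa eps nu alpha beta.

Lemma Dx_eq t : Derive x t = v t.
Proof. apply is_derive_unique. apply xsol_d; auto. Qed.

Theorem existence : ode_solution kappa eps nu alpha beta x.
Proof.
  pose proof (mm_pos kappa eps alpha beta) as Hm.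
  unfold ode_solution. split; [|split; [|split; [|split]]].
  - intros t Ht. destruct (xsol_region kappa eps nu alpha beta Hk He Hn Ha t Ht). fold x in H. lra.
  - apply xsol_0; auto.
  - fold x. replace beta with (v 0) by (apply vsol_0; auto).
    apply dq_right. apply is_derive_Reals. apply xsol_d; auto.
  - replace beta with (v 0) by (apply vsol_0; auto).
    apply (filterlim_ext v). { intros; symmetry; apply Dx_eq. }
    apply cont_right. apply exd_cont. eexists. apply vsol_d; auto.
  - intros t Ht. destruct (xsol_region kappa eps nu alpha beta Hk He Hn Ha t (Rlt_le _ _ Ht)) as [R1 R2].
    fold x v in R1, R2.
    split; [eexists; apply xsol_d; auto|].
    split.
    + apply (ex_derive_ext v). { intros; symmetry; apply Dx_eq. } eexists; apply vsol_d; auto.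
    + rewrite (Derive_ext (Derive x) v) by apply Dx_eq.
      rewrite (is_derive_unique v t _ (vsol_d kappa eps nu alpha beta Hk He Hn Ha t)).
      rewrite Dx_eq. fold x v. apply G_eq_F; auto.
Qed.

End ExistThm.

Lemma tau_right (f : R -> R) l :
  filterlim (fun h => (f h - f 0) / h) (at_right 0) (locally l) ->
  filterlim f (at_right 0) (locally (f 0)).
Proof.
  intros H. apply filterlim_locally. intros eps.
  destruct (proj1 (filterlim_locally _ l) H (mkposreal 1 Rlt_0_1)) as [d Hd].
  assert (Hp : 0 < Rmin d (eps / (Rabs l + 1))).
  { apply Rmin_pos; [apply cond_pos|]. apply Rdiv_lt_0_compat; [apply cond_pos|pose proof (Rabs_pos l); lra]. }
  exists (mkposreal _ Hp). intros y Hy Hy0. simpl in Hy.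
  apply ball_abs in Hy. rewrite Rminus_0_r, Rabs_pos_eq in Hy by lra.
  pose proof (Rmin_l d (eps / (Rabs l + 1))). pose proof (Rmin_r d (eps / (Rabs l + 1))).
  assert (Hb : ball 0 d y) by (apply abs_ball; rewrite Rminus_0_r, Rabs_pos_eq; lra).
  specialize (Hd y Hb Hy0). apply ball_abs in Hd. simpl in Hd.
  apply abs_ball.
  replace (f y - f 0) with (y * ((f y - f 0) / y)) by (field; lra).
  rewrite Rabs_mult, (Rabs_pos_eq y) by lra.
  assert (Rabs ((f y - f 0) / y) < Rabs l + 1).
  { pose proof (Rabs_triang_inv ((f y - f 0) / y) l). lra. }
  assert (y * (Rabs l + 1) < eps).
  { pose proof (Rabs_pos l). assert (Hy2 : y < eps / (Rabs l + 1)) by lra.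
    apply (Rmult_lt_compat_r (Rabs l + 1)) in Hy2; [|lra].
    replace (eps / (Rabs l + 1) * (Rabs l + 1)) with (pos eps) in Hy2 by (field; lra). lra. }
  pose proof (Rabs_pos ((f y - f 0) / y)). nra.
Qed.

Lemma lim_comp_cont (f g : R -> R) F {FF : Filter F} l :
  filterlim f F (locally l) -> continuous g l -> filterlim (fun t => g (f t)) F (locally (g l)).
Proof. intros H1 H2. exact (filterlim_comp _ _ _ f g F (locally l) (locally (g l)) H1 H2). Qed.

Lemma lim_plus (f g : R -> R) F {FF : Filter F} l1 l2 :
  filterlim f F (locally l1) -> filterlim g F (locally l2) ->
  filterlim (fun t => f t + g t) F (locally (l1 + l2)).
Proof.
  intros H1 H2.
  apply (filterlim_comp_2 f g (fun a b => plus a b) H1 H2).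
  exact (filterlim_plus (K := R_AbsRing) (V := R_NormedModule) l1 l2).
Qed.

Lemma lim_minus (f g : R -> R) F {FF : Filter F} l1 l2 :
  filterlim f F (locally l1) -> filterlim g F (locally l2) ->
  filterlim (fun t => f t - g t) F (locally (l1 - l2)).
Proof.
  intros H1 H2.
  assert (H3 : filterlim (fun t => - g t) F (locally (- l2))).
  { apply (lim_comp_cont g (fun y => - y)); auto. apply exd_cont. auto_derive. auto. }
  exact (lim_plus f (fun t => - g t) F l1 (- l2) H1 H3).
Qed.

Lemma lim_mult (f g : R -> R) F {FF : Filter F} l1 l2 :
  filterlim f F (locally l1) -> filterlim g F (locally l2) ->
  filterlim (fun t => f t * g t) F (locally (l1 * l2)).
Proof.
  intros H1 H2.
  apply (filterlim_comp_2 f g (fun a b => mult a b) H1 H2).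
  exact (filterlim_mult (K := R_AbsRing) l1 l2).
Qed.

Section Sol.
Variables kappa eps nu alpha beta : R.
Hypotheses (Hk : 0 < kappa) (He : 0 <= eps) (Hn : 0 <= nu) (Ha : 0 < alpha).
Variable tau : R -> R.
Hypothesis Hsol : ode_solution kappa eps nu alpha beta tau.
Local Set Default Proof Using "Hk He Hn Ha Hsol".

Let v := Derive tau.

Lemma sol_pos t : 0 <= t -> 0 < tau t.
Proof. apply Hsol. Qed.
Lemma sol_0 : tau 0 = alpha.
Proof. apply Hsol. Qed.
Lemma sol_tau_right : filterlim tau (at_right 0) (locally alpha).
Proof. rewrite <- sol_0. apply (tau_right tau beta). apply Hsol. Qed.
Lemma sol_v_right : filterlim v (at_right 0) (locally beta).
Proof. apply Hsol. Qed.
Lemma sol_dx t : 0 < t -> is_derive tau t (v t).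
Proof. intros Ht. apply Derive_correct. apply Hsol; auto. Qed.
Lemma sol_dv t : 0 < t -> is_derive v t (F kappa eps nu (tau t) (v t)).
Proof.
  intros Ht. destruct Hsol as [_ [_ [_ [_ H]]]]. destruct (H t Ht) as [_ [H2 H3]].
  unfold F, v. rewrite <- H3. apply Derive_correct; auto.
Qed.

Definition p1 y := 2*kappa*ln y - eps^2/(2*y^2).

Lemma p1_d y : 0 < y -> is_derive p1 y (2*kappa/y + eps^2/y^3).
Proof.
  intros Hy. unfold p1. auto_derive.
  - repeat split; auto. apply Rgt_not_eq. nra.
  - field. lra.
Qed.

Definition Eg t := v t ^ 2 / 2 - p1 (tau t).

Lemma Eg_right : filterlim Eg (at_right 0) (locally (E0 kappa eps alpha beta)).
Proof.
  unfold Eg.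
  replace (E0 kappa eps alpha beta) with ((fun y => y^2/2) beta - p1 alpha) by (unfold E0, p1; ring).
  apply (lim_minus _ _ (at_right 0)).
  - apply (lim_comp_cont v (fun y => y^2/2) (at_right 0)). apply sol_v_right. apply exd_cont. auto_derive. auto.
  - apply (lim_comp_cont tau p1 (at_right 0)). apply sol_tau_right. apply exd_cont. eexists. apply p1_d; auto.
Qed.

Lemma Eg_decr s t : 0 < s -> s <= t -> Eg t <= Eg s.
Proof.
  apply (decr_on Eg (fun t => v t * F kappa eps nu (tau t) (v t) - (2*kappa/tau t + eps^2/tau t^3) * v t) 0).
  - intros x Hx. apply energy_deriv; [apply sol_dx; auto|apply sol_dv; auto|apply p1_d, sol_pos; lra].
  - intros x Hx. pose proof (sol_pos x (Rlt_le _ _ Hx)). unfold F.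
    replace (v x * (2 * kappa / tau x + eps ^ 2 / tau x ^ 3 - nu * v x / tau x ^ 2) -
      (2 * kappa / tau x + eps ^ 2 / tau x ^ 3) * v x) with (- (nu * (v x ^ 2 / tau x ^ 2))) by (field; lra).
    assert (0 <= v x ^ 2 / tau x ^ 2) by (apply Rdiv_le_0_compat; nra). nra.
Qed.

Lemma Eg_le t : 0 < t -> Eg t <= E0 kappa eps alpha beta.
Proof. apply decr_right_lim. intros; apply Eg_decr; auto. apply Eg_right. Qed.

Lemma sol_region t : 0 < t ->
  mm kappa eps alpha beta <= tau t /\ Rabs (v t) <= cc kappa eps alpha beta * tau t.
Proof.
  intros Ht. pose proof (Eg_le t Ht) as H. unfold Eg, p1 in H. pose proof (sol_pos t (Rlt_le _ _ Ht)).
  assert (0 <= eps ^ 2 / (2 * tau t ^ 2)) by (apply Rdiv_le_0_compat; nra).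
  pose proof (pow2_ge_0 (v t)).
  assert (Hlow : mm kappa eps alpha beta <= tau t) by (apply lower_of_energy; auto; lra).
  split; auto. apply region_of_energy; auto. lra.
Qed.

Lemma sol_G t : 0 < t -> F kappa eps nu (tau t) (v t) = G kappa eps nu alpha beta (tau t) (v t).
Proof. intros Ht. destruct (sol_region t Ht). symmetry. apply G_eq_F; auto. Qed.

End Sol.

Lemma w_deriv (x1 x2 v1 v2 : R -> R) (g1 g2 C t : R) :
  is_derive x1 t (v1 t) -> is_derive x2 t (v2 t) -> is_derive v1 t g1 -> is_derive v2 t g2 ->
  is_derive (fun s => ((x1 s - x2 s)^2 + (v1 s - v2 s)^2) * exp (- C * s)) t
    ((2*(x1 t - x2 t)*(v1 t - v2 t) + 2*(v1 t - v2 t)*(g1 - g2) - C*((x1 t - x2 t)^2 + (v1 t - v2 t)^2)) * exp (- C * t)).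
Proof.
  intros H1 H2 H3 H4. auto_derive.
  - repeat split; eexists; eauto.
  - replace (Derive (fun x0 : R => x1 x0) t) with (v1 t) by (symmetry; apply is_derive_unique; auto).
    replace (Derive (fun x0 : R => x2 x0) t) with (v2 t) by (symmetry; apply is_derive_unique; auto).
    replace (Derive (fun x0 : R => v1 x0) t) with g1 by (symmetry; apply is_derive_unique; auto).
    replace (Derive (fun x0 : R => v2 x0) t) with g2 by (symmetry; apply is_derive_unique; auto).
    ring.
Qed.

Lemma quad_bound (a b d L : R) : 0 <= L -> Rabs d <= L * (Rabs a + Rabs b) ->
  2*a*b + 2*b*d - (1 + 3*L)*(a^2 + b^2) <= 0.
Proof.
  intros HL Hd.
  assert (2*a*b <= a^2 + b^2) by (pose proof (pow2_ge_0 (a - b)); nra).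
  assert (2*b*d <= 2 * Rabs b * Rabs d).
  { replace (2 * Rabs b * Rabs d) with (2 * Rabs (b * d)) by (rewrite Rabs_mult; ring).
    pose proof (Rle_abs (b*d)). lra. }
  assert (2 * Rabs b * Rabs d <= 2 * Rabs b * (L * (Rabs a + Rabs b))).
  { apply Rmult_le_compat_l; auto. pose proof (Rabs_pos b). lra. }
  assert (2 * Rabs a * Rabs b <= a^2 + b^2).
  { rewrite <- (pow2_abs a), <- (pow2_abs b). pose proof (pow2_ge_0 (Rabs a - Rabs b)). nra. }
  assert (Rabs b * Rabs b = b^2) by (rewrite <- (pow2_abs b); ring).
  nra.
Qed.

Section Uniq.
Variables kappa eps nu alpha beta : R.
Hypotheses (Hk : 0 < kappa) (He : 0 <= eps) (Hn : 0 <= nu) (Ha : 0 < alpha).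
Variables tau1 tau2 : R -> R.
Hypothesis Hs1 : ode_solution kappa eps nu alpha beta tau1.
Hypothesis Hs2 : ode_solution kappa eps nu alpha beta tau2.
Local Set Default Proof Using "Hk He Hn Ha Hs1 Hs2".

Let v1 := Derive tau1.
Let v2 := Derive tau2.
Let L := LL kappa eps nu alpha beta.
Let C := 1 + 3 * L.
Let Gm := G kappa eps nu alpha beta.

Definition wfun s := ((tau1 s - tau2 s)^2 + (v1 s - v2 s)^2) * exp (- C * s).

Lemma w_right : filterlim wfun (at_right 0) (locally 0).
Proof.
  replace 0 with (((fun y => y^2) (alpha - alpha) + (fun y => y^2) (beta - beta)) * exp (- C * 0)) at 2
    by (simpl; ring).
  unfold wfun. apply (lim_mult _ _ (at_right 0)).
  - apply (lim_plus _ _ (at_right 0)).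
    + apply (lim_comp_cont (fun s => tau1 s - tau2 s) (fun y => y^2) (at_right 0)).
      * apply (lim_minus _ _ (at_right 0)); [apply (sol_tau_right kappa eps nu alpha beta Hk He Hn Ha tau1 Hs1)|apply (sol_tau_right kappa eps nu alpha beta Hk He Hn Ha tau2 Hs2)].
      * apply exd_cont. auto_derive. auto.
    + apply (lim_comp_cont (fun s => v1 s - v2 s) (fun y => y^2) (at_right 0)).
      * apply (lim_minus _ _ (at_right 0)); [apply (sol_v_right kappa eps nu alpha beta Hk He Hn Ha tau1 Hs1)|apply (sol_v_right kappa eps nu alpha beta Hk He Hn Ha tau2 Hs2)].
      * apply exd_cont. auto_derive. auto.
  - apply (cont_right (fun s => exp (- C * s))). apply exd_cont. auto_derive. auto.
Qed.

Lemma w_decr s t : 0 < s -> s <= t -> wfun t <= wfun s.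
Proof.
  apply (decr_on wfun (fun t => (2*(tau1 t - tau2 t)*(v1 t - v2 t) +
      2*(v1 t - v2 t)*(Gm (tau1 t) (v1 t) - Gm (tau2 t) (v2 t)) -
      C*((tau1 t - tau2 t)^2 + (v1 t - v2 t)^2)) * exp (- C * t)) 0).
  - intros x Hx. apply w_deriv.
    + apply (sol_dx kappa eps nu alpha beta Hk He Hn Ha tau1 Hs1); auto.
    + apply (sol_dx kappa eps nu alpha beta Hk He Hn Ha tau2 Hs2); auto.
    + unfold Gm, v1, v2. rewrite <- (sol_G kappa eps nu alpha beta Hk He Hn Ha tau1 Hs1 x Hx). apply (sol_dv kappa eps nu alpha beta Hk He Hn Ha tau1 Hs1); auto.
    + unfold Gm, v1, v2. rewrite <- (sol_G kappa eps nu alpha beta Hk He Hn Ha tau2 Hs2 x Hx). apply (sol_dv kappa eps nu alpha beta Hk He Hn Ha tau2 Hs2); auto.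
  - intros x Hx. pose proof (exp_pos (- C * x)).
    assert (HL : 0 <= L) by (apply L_nonneg; auto).
    pose proof (quad_bound (tau1 x - tau2 x) (v1 x - v2 x) (Gm (tau1 x) (v1 x) - Gm (tau2 x) (v2 x)) L HL
      (G_lip kappa eps nu alpha beta Hk Hn _ _ _ _)).
    apply (Rmult_le_compat_r (exp (- C * x))) in H0; [|lra]. rewrite Rmult_0_l in H0.
    unfold C. exact H0.
Qed.

Lemma uniq t : 0 <= t -> tau1 t = tau2 t.
Proof.
  intros Ht. destruct (Req_dec t 0) as [->|Hne].
  - rewrite (sol_0 kappa eps nu alpha beta Hk He Hn Ha tau1 Hs1), (sol_0 kappa eps nu alpha beta Hk He Hn Ha tau2 Hs2). auto.
  - assert (Ht' : 0 < t) by lra.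
    pose proof (decr_right_lim wfun 0 w_decr w_right t Ht') as H.
    unfold wfun in H. pose proof (exp_pos (- C * t)).
    pose proof (pow2_ge_0 (tau1 t - tau2 t)). pose proof (pow2_ge_0 (v1 t - v2 t)).
    assert ((tau1 t - tau2 t)^2 + (v1 t - v2 t)^2 <= 0) by nra.
    assert ((tau1 t - tau2 t)^2 = 0) by lra. nra.
Qed.

End Uniq.

Section Asym.
Variables kappa eps nu alpha beta : R.
Hypotheses (Hk : 0 < kappa) (He : 0 <= eps) (Hn : 0 <= nu) (Ha : 0 < alpha).
Variable tau : R -> R.
Hypothesis Hsol : ode_solution kappa eps nu alpha beta tau.
Local Set Default Proof Using "Hk He Hn Ha Hsol".

Let v := Derive tau.
Let m := mm kappa eps alpha beta.

Lemma a_dx t : 0 < t -> is_derive tau t (v t).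
Proof. apply (sol_dx kappa eps nu alpha beta Hk He Hn Ha tau Hsol). Qed.
Lemma a_dv t : 0 < t -> is_derive v t (F kappa eps nu (tau t) (v t)).
Proof. apply (sol_dv kappa eps nu alpha beta Hk He Hn Ha tau Hsol). Qed.
Lemma a_reg t : 0 < t -> m <= tau t /\ Rabs (v t) <= cc kappa eps alpha beta * tau t.
Proof. apply (sol_region kappa eps nu alpha beta Hk He Hn Ha tau Hsol). Qed.
Lemma a_Eg t : 0 < t -> v t ^ 2 / 2 - (2*kappa*ln (tau t) - eps^2/(2*(tau t)^2)) <= E0 kappa eps alpha beta.
Proof. apply (Eg_le kappa eps nu alpha beta Hk He Hn Ha tau Hsol). Qed.
Lemma a_m : 0 < m.
Proof. apply mm_pos. Qed.
Lemma a_pos t : 0 < t -> 0 < tau t.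
Proof. intros Ht. pose proof a_m. destruct (a_reg t Ht). lra. Qed.

Ltac rwD := 
  repeat match goal with
  | |- context [Derive (fun x0 : R => tau x0) ?t] =>
      replace (Derive (fun x0 : R => tau x0) t) with (v t) by (symmetry; apply is_derive_unique; apply a_dx; lra)
  | |- context [Derive (fun x0 : R => v x0) ?t] =>
      replace (Derive (fun x0 : R => v x0) t) with (F kappa eps nu (tau t) (v t)) by (symmetry; apply is_derive_unique; apply a_dv; lra)
  end.

Lemma exd_tau t : 0 < t -> ex_derive tau t.
Proof. intros Ht. eexists. apply a_dx; auto. Qed.
Lemma exd_v t : 0 < t -> ex_derive v t.
Proof. intros Ht. eexists. apply a_dv; auto. Qed.

Definition uf t := v t - nu / tau t.

Lemma u_d t : 0 < t -> is_derive uf t (2*kappa/tau t + eps^2/tau t^3).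
Proof.
  intros Ht. pose proof (a_pos t Ht). unfold uf. auto_derive.
  - repeat split; try apply exd_tau; try apply exd_v; auto. lra.
  - rwD. unfold F. field. lra.
Qed.

Lemma u_incr s t : 0 < s -> s <= t -> uf s <= uf t.
Proof.
  apply (incr_on uf (fun t => 2*kappa/tau t + eps^2/tau t^3) 0).
  - apply u_d.
  - intros x Hx. pose proof (a_pos x Hx).
    assert (0 < 2 * kappa / tau x) by (apply Rdiv_lt_0_compat; lra).
    assert (0 <= eps ^ 2 / tau x ^ 3) by (apply Rdiv_le_0_compat; [nra|apply pow_lt; lra]). lra.
Qed.

Lemma u_unbounded U : exists t, 0 < t /\ U < uf t.
Proof.
  destruct (Rle_dec 0 0) as [_|]; [|lra].
  assert (Hc : (exists t, 0 < t /\ U < uf t) \/ (forall t, 0 < t -> uf t <= U)).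
  { destruct (Classical_Prop.classic (exists t, 0 < t /\ U < uf t)) as [H|H]; [left; auto|right].
    intros t Ht. destruct (Rle_dec (uf t) U); auto. exfalso. apply H. exists t. split; auto. lra. }
  destruct Hc as [|Hle]; auto. exfalso.
  pose proof a_m as Hm.
  set (V := Rmax (U + nu / m) 1).
  assert (HV1 : 1 <= V) by apply Rmax_r.
  assert (Hv : forall t, 0 < t -> v t <= V).
  { intros t Ht. specialize (Hle t Ht). unfold uf in Hle. destruct (a_reg t Ht) as [Hr _].
    assert (nu / tau t <= nu / m).
    { unfold Rdiv. apply Rmult_le_compat_l; auto. apply Rinv_le_contravar; lra. }
    pose proof (Rmax_l (U + nu / m) 1). fold V in H0. lra. }
  set (h := fun t => uf t - (2*kappa/V) * ln (tau t)).
  assert (Hh : forall s t, 0 < s -> s <= t -> h s <= h t).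
  { apply (incr_on h (fun t => 2*kappa/tau t + eps^2/tau t^3 - (2*kappa/V) * (v t / tau t)) 0).
    - intros x Hx. pose proof (a_pos x Hx). unfold h.
      apply (is_derive_minus uf (fun t => 2 * kappa / V * ln (tau t)) x).
      + apply u_d; auto.
      + auto_derive.
        * repeat split; auto. apply exd_tau; auto.
        * rwD. field. lra.
    - intros x Hx. pose proof (a_pos x Hx). pose proof (Hv x Hx).
      assert (0 <= eps ^ 2 / tau x ^ 3) by (apply Rdiv_le_0_compat; [nra|apply pow_lt; lra]).
      replace (2 * kappa / tau x + eps ^ 2 / tau x ^ 3 - 2 * kappa / V * (v x / tau x))
        with (eps ^ 2 / tau x ^ 3 + (2*kappa / (V * tau x)) * (V - v x)) by (field; lra).
      assert (0 < 2 * kappa / (V * tau x)) by (apply Rdiv_lt_0_compat; nra).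
      apply Rplus_le_le_0_compat; [lra|apply Rmult_le_pos; lra]. }
  set (B := exp ((U - h 1) * V / (2 * kappa))).
  assert (HB : forall t, 1 <= t -> tau t <= B).
  { intros t Ht. specialize (Hh 1 t ltac:(lra) Ht). specialize (Hle t ltac:(lra)).
    pose proof (a_pos t ltac:(lra)). unfold h in Hh.
    rewrite <- (exp_ln (tau t)) by lra. unfold B. apply exp_le.
    apply (Rmult_le_reg_l (2 * kappa / V)); [apply Rdiv_lt_0_compat; lra|].
    replace (2 * kappa / V * ((U - h 1) * V / (2 * kappa))) with (U - h 1) by (field; lra).
    unfold h. lra. }
  assert (HB0 : 0 < B) by apply exp_pos.
  set (k := fun t => uf t - (2*kappa/B) * t).
  assert (Hkk : forall s t, 1 < s -> s <= t -> k s <= k t).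
  { apply (incr_on k (fun t => 2*kappa/tau t + eps^2/tau t^3 - 2*kappa/B) 1).
    - intros x Hx. unfold k.
      apply (is_derive_minus uf (fun t => 2 * kappa / B * t) x).
      + apply u_d; lra.
      + auto_derive; auto. ring.
    - intros x Hx. pose proof (a_pos x ltac:(lra)). pose proof (HB x ltac:(lra)).
      assert (0 <= eps ^ 2 / tau x ^ 3) by (apply Rdiv_le_0_compat; [nra|apply pow_lt; lra]).
      assert (2 * kappa / B <= 2 * kappa / tau x).
      { unfold Rdiv. apply Rmult_le_compat_l; [lra|]. apply Rinv_le_contravar; lra. }
      lra. }
  set (ts := 2 + B * (U - uf 2 + 1) / (2 * kappa)).
  assert (Hu2 : uf 2 <= U) by (apply Hle; lra).
  assert (Hts : 2 <= ts).
  { unfold ts. assert (0 <= B * (U - uf 2 + 1) / (2 * kappa)) by (apply Rdiv_le_0_compat; nra). lra. }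
  specialize (Hkk 2 ts ltac:(lra) Hts). unfold k in Hkk.
  specialize (Hle ts ltac:(lra)).
  assert (2 * kappa / B * ts - 2 * kappa / B * 2 = U - uf 2 + 1) by (unfold ts; field; lra).
  lra.
Qed.

Lemma v_large M : exists T, 0 < T /\ forall t, T <= t -> M <= v t.
Proof.
  destruct (u_unbounded M) as [t0 [Ht0 Hu]]. exists t0. split; auto.
  intros t Ht. pose proof (u_incr t0 t Ht0 Ht). unfold uf in *. pose proof (a_pos t ltac:(lra)).
  assert (0 <= nu / tau t) by (apply Rdiv_le_0_compat; lra). lra.
Qed.

Lemma tau_inf : tinf tau.
Proof.
  intros A. destruct (v_large 1) as [T [HT Hv]].
  assert (H : forall t, T + 1 <= t -> tau (T + 1) - (T + 1) <= tau t - t).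
  { intros t Ht. apply (incr_on (fun t => tau t - t) (fun t => v t - 1) T); try lra.
    - intros x Hx. apply (is_derive_minus tau (fun t => t) x (v x) 1).
      + apply a_dx; lra.
      + auto_derive; auto.
    - intros x Hx. specialize (Hv x ltac:(lra)). lra. }
  exists (Rmax (T + 1) (A + T + 1)). intros t Ht.
  pose proof (Rmax_l (T + 1) (A + T + 1)). pose proof (Rmax_r (T + 1) (A + T + 1)).
  specialize (H t ltac:(lra)). pose proof (a_pos (T + 1) ltac:(lra)). lra.
Qed.

Let E0' := E0 kappa eps alpha beta.
Definition C0 := 1 + 2 * Rabs E0' / m + 4 * kappa.

Lemma C0_ge1 : 1 <= C0.
Proof.
  unfold C0. pose proof a_m. assert (0 <= 2 * Rabs E0' / m) by (apply Rdiv_le_0_compat; [pose proof (Rabs_pos E0'); lra|lra]). lra.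
Qed.

Lemma v_sqrt_bound t : 0 < t -> v t <= C0 * sqrt (tau t).
Proof.
  intros Ht. pose proof (a_Eg t Ht) as H. fold E0' in H. pose proof (a_pos t Ht) as Hp. pose proof a_m as Hm.
  destruct (a_reg t Ht) as [Hr _]. fold m in Hr.
  assert (H1 : ln (tau t) <= tau t - 1) by (apply ln_le_sub1; lra).
  assert (H2 : 0 <= eps ^ 2 / (2 * tau t ^ 2)) by (apply Rdiv_le_0_compat; nra).
  assert (H3 : Rabs E0' <= Rabs E0' * (tau t / m)).
  { assert (1 <= tau t / m).
    { apply (Rmult_le_reg_r m); auto. replace (tau t / m * m) with (tau t) by (field; lra). lra. }
    pose proof (Rabs_pos E0'). nra. }
  assert (H4 : v t ^ 2 <= C0 * tau t).
  { pose proof (Rle_abs E0'). unfold C0.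
    replace ((1 + 2 * Rabs E0' / m + 4 * kappa) * tau t) with (tau t + 2 * (Rabs E0' * (tau t / m)) + 4 * kappa * tau t) by (field; lra).
    nra. }
  pose proof C0_ge1.
  assert (H5 : v t ^ 2 <= C0 ^ 2 * tau t) by nra.
  pose proof (sqrt_sqrt (tau t) ltac:(lra)) as Hss. pose proof (sqrt_pos (tau t)).
  destruct (Rle_dec (v t) (C0 * sqrt (tau t))) as [|Hn']; auto. exfalso.
  assert (C0 * sqrt (tau t) < v t) by lra.
  assert (0 <= C0 * sqrt (tau t)) by nra.
  assert ((C0 * sqrt (tau t)) * (C0 * sqrt (tau t)) < v t * v t) by nra.
  assert (E1 : (C0 * sqrt (tau t)) * (C0 * sqrt (tau t)) = C0 ^ 2 * (sqrt (tau t) * sqrt (tau t))) by ring.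
  rewrite Hss in E1.
  nra.
Qed.

Lemma energy_lower : exists T h1, 0 < T /\ forall t, T <= t ->
  0 <= v t /\ h1 <= v t ^ 2 / 2 - (2*kappa*ln (tau t) - eps^2/(2*(tau t)^2)).
Proof.
  destruct (v_large 1) as [T1 [HT1 Hv1]].
  set (Hf := fun t => v t ^ 2 / 2 - (2*kappa*ln (tau t) - eps^2/(2*(tau t)^2)) - 2 * nu * C0 / sqrt (tau t)).
  assert (Hinc : forall s t, T1 < s -> s <= t -> Hf s <= Hf t).
  { apply (incr_on Hf (fun t => nu * v t / (tau t)^2 * (C0 * sqrt (tau t) - v t)) T1).
    - intros x Hx. pose proof (a_pos x ltac:(lra)). unfold Hf. auto_derive.
      + repeat split; try apply exd_tau; try apply exd_v; try lra.
        * apply Rgt_not_eq. nra.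
        * apply Rgt_not_eq. apply sqrt_lt_R0. lra.
      + rwD. unfold F.
        pose proof (sqrt_lt_R0 _ H). pose proof (sqrt_sqrt (tau x) ltac:(lra)).
        set (q := sqrt (tau x)) in *.
        replace (tau x) with (q * q) by auto.
        field. lra.
    - intros x Hx. pose proof (a_pos x ltac:(lra)). specialize (Hv1 x ltac:(lra)).
      pose proof (v_sqrt_bound x ltac:(lra)).
      apply Rmult_le_pos; [|lra]. apply Rdiv_le_0_compat; [nra|]. nra. }
  exists (T1 + 1), (Hf (T1 + 1)). split; [lra|]. intros t Ht.
  split; [specialize (Hv1 t ltac:(lra)); lra|].
  specialize (Hinc (T1 + 1) t ltac:(lra) Ht). unfold Hf in Hinc.
  pose proof (a_pos t ltac:(lra)). pose proof (sqrt_lt_R0 _ H). pose proof C0_ge1.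
  assert (0 <= 2 * nu * C0 / sqrt (tau t)) by (apply Rdiv_le_0_compat; nra).
  unfold Hf. lra.
Qed.

Lemma v2_near : exists T Q, 0 < T /\ forall t, T <= t ->
  0 <= v t /\ Rabs (v t ^ 2 - 4 * kappa * ln (tau t)) <= Q.
Proof.
  destruct energy_lower as [T [h1 [HT H]]].
  exists T, (2 * Rabs E0' + 2 * Rabs h1 + eps^2 / m^2). split; auto. intros t Ht.
  destruct (H t Ht) as [Hv Hl]. split; auto.
  pose proof (a_Eg t ltac:(lra)) as Hu. fold E0' in Hu. pose proof (a_pos t ltac:(lra)). pose proof a_m.
  destruct (a_reg t ltac:(lra)) as [Hr _]. fold m in Hr.
  assert (A1 : 0 <= eps ^ 2 / (2 * tau t ^ 2)) by (apply Rdiv_le_0_compat; nra).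
  assert (A2 : eps ^ 2 / (2 * tau t ^ 2) <= eps ^ 2 / m ^ 2 / 2).
  { replace (eps ^ 2 / (2 * tau t ^ 2)) with (eps^2 / tau t ^ 2 / 2) by (field; lra).
    apply Rmult_le_compat_r; [lra|]. unfold Rdiv. apply Rmult_le_compat_l; [nra|].
    apply Rinv_le_contravar; nra. }
  pose proof (Rle_abs E0'). pose proof (Rle_abs h1). pose proof (Rabs_pos E0'). pose proof (Rabs_pos h1).
  pose proof (proj1 (Rabs_le_between h1 (Rabs h1)) (Rle_refl _)).
  apply Rabs_le. split; lra.
Qed.

Definition ell t := ln (tau t).

Lemma ell_inf : tinf ell.
Proof.
  intros A. destruct (tau_inf (exp A)) as [M HM]. exists M. intros t Ht. specialize (HM t Ht).
  unfold ell. rewrite <- (ln_exp A). apply ln_increasing; auto. apply exp_pos.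
Qed.

Lemma tends_eq f l l' : tends f l -> l = l' -> tends f l'.
Proof. intros H ->. auto. Qed.

Lemma tinf_scal k f : 0 < k -> tinf f -> tinf (fun t => k * f t).
Proof.
  intros Hk' H A. destruct (H (A / k)) as [M HM]. exists M. intros t Ht. specialize (HM t Ht).
  apply (Rmult_lt_compat_l k) in HM; auto. replace (k * (A / k)) with A in HM by (field; lra). auto.
Qed.

Lemma tinf_sqrt f : tinf f -> tinf (fun t => sqrt (f t)).
Proof.
  intros H A. destruct (H (A * A + 1)) as [M HM]. exists M. intros t Ht. specialize (HM t Ht).
  pose proof (sqrt_pos (f t)). destruct (Rlt_dec A 0); [lra|].
  destruct (Rle_dec (sqrt (f t)) A) as [Hle|]; [|lra]. exfalso.
  pose proof (sqrt_sqrt (f t) ltac:(nra)). nra.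
Qed.

Definition rr t := v t / (2 * sqrt kappa * sqrt (ell t)).

Lemma rr_lim : tends rr 1.
Proof.
  destruct v2_near as [T [Q [HT HQ]]].
  pose proof (sqrt_lt_R0 _ Hk) as Hsk. pose proof (sqrt_sqrt _ (Rlt_le _ _ Hk)) as Hsk2.
  set (y := fun t => v t ^ 2 / (4 * kappa * ell t)).
  assert (Hy : tends y 1).
  { apply (tends_bound _ (fun t => Q * / (4 * kappa * ell t))).
    - destruct (ell_inf 0) as [M HM]. exists (Rmax M T). intros t Ht.
      pose proof (Rmax_l M T). pose proof (Rmax_r M T).
      specialize (HM t ltac:(lra)). destruct (HQ t ltac:(lra)) as [_ HQt].
      unfold y. replace (v t ^ 2 / (4 * kappa * ell t) - 1) with ((v t ^ 2 - 4 * kappa * ell t) * / (4 * kappa * ell t)) by (field; lra).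
      rewrite Rabs_mult, (Rabs_pos_eq (/ _)) by (apply Rlt_le, Rinv_0_lt_compat; nra).
      apply Rmult_le_compat_r; [apply Rlt_le, Rinv_0_lt_compat; nra|]. unfold ell. auto.
    - apply (tends_eq _ (Q * 0)); [|ring]. apply tends_scal. apply tends_inv_inf.
      apply (tinf_scal (4 * kappa) ell); [lra|apply ell_inf]. }
  apply (tends_ext (fun t => sqrt (y t))).
  - destruct (ell_inf 0) as [M HM]. exists (Rmax M T). intros t Ht.
    pose proof (Rmax_l M T). pose proof (Rmax_r M T).
    specialize (HM t ltac:(lra)). destruct (HQ t ltac:(lra)) as [Hv _].
    pose proof (sqrt_lt_R0 _ HM). pose proof (sqrt_sqrt _ (Rlt_le _ _ HM)).
    unfold y, rr. apply sqrt_lem_1.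
    + apply Rdiv_le_0_compat; nra.
    + apply Rdiv_le_0_compat; nra.
    + set (a := sqrt kappa) in *. set (b := sqrt (ell t)) in *.
      rewrite <- Hsk2, <- H2. field. split; lra.
  - apply tends_sqrt1; auto.
    destruct (ell_inf 0) as [M HM]. exists M. intros t Ht. specialize (HM t Ht).
    unfold y. apply Rdiv_le_0_compat; nra.
Qed.

Definition Psi t := tau t / sqrt (ell t).
Definition dPsi t := 2 * sqrt kappa * rr t * (1 + (-1) * / (2 * ell t)).

Lemma Psi_d : exists T, forall t, T < t -> is_derive Psi t (dPsi t).
Proof.
  destruct (ell_inf 0) as [M HM]. exists (Rmax M 0). intros t Ht.
  pose proof (Rmax_l M 0). pose proof (Rmax_r M 0).
  specialize (HM t ltac:(lra)). pose proof (a_pos t ltac:(lra)).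
  pose proof (sqrt_lt_R0 _ HM). pose proof (sqrt_sqrt _ (Rlt_le _ _ HM)) as Hq2.
  pose proof (sqrt_lt_R0 _ Hk) as Hsk.
  unfold Psi, dPsi, rr, ell in *. auto_derive.
  - repeat split; try apply exd_tau; try lra.
  - rwD. set (a := sqrt kappa) in *. set (q := sqrt (ln (tau t))) in *.
    rewrite <- Hq2. field. repeat split; lra.
Qed.

Lemma Psi_lim : tends (fun t => Psi t / t) (2 * sqrt kappa).
Proof.
  destruct Psi_d as [T HT]. apply (cesaro Psi dPsi T); auto.
  unfold dPsi. apply (tends_eq _ (2 * sqrt kappa * 1 * (1 + (-1) * 0))); [|ring].
  apply tends_mult.
  - apply tends_scal. apply rr_lim.
  - apply tends_plus. apply tends_const. apply tends_scal. apply tends_inv_inf.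
    apply (tinf_scal 2 ell); [lra|apply ell_inf].
Qed.

Lemma ev_tends_between f l e0 : tends f l -> 0 < e0 -> ev (fun t => l - e0 < f t < l + e0).
Proof.
  intros H He0. destruct (H e0 He0) as [M HM]. exists M. intros t Ht. specialize (HM t Ht).
  apply Rabs_def2 in HM. lra.
Qed.

Lemma lnratio : tends (fun t => ln t / ell t) 1.
Proof.
  pose proof (sqrt_lt_R0 _ Hk) as Hsk.
  set (K1 := Rabs (ln (sqrt kappa)) + Rabs (ln (3 * sqrt kappa))).
  apply (tends_bound _ (fun t => K1 * / ell t + / sqrt (ell t))).
  - assert (E := ev_and _ _ (ev_tends_between _ _ (sqrt kappa) Psi_lim Hsk)
                  (ev_and _ _ (ev_gt 1) (ell_inf 1))).
    apply (ev_imp _ _ E). intros t [HP [Ht Hl]].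
    set (P := Psi t / t) in *. set (l := ell t) in *.
    assert (HP0 : 0 < P) by lra.
    pose proof (sqrt_lt_R0 l ltac:(lra)) as Hsl. pose proof (sqrt_sqrt l ltac:(lra)) as Hsl2.
    assert (Hsl1 : 1 <= sqrt l).
    { destruct (Rle_dec 1 (sqrt l)); auto. nra. }
    assert (Htau : tau t = P * t * sqrt l).
    { unfold P, Psi. fold l. field. lra. }
    assert (Hl' : l = ln P + ln t + ln (sqrt l)).
    { unfold l at 1, ell. rewrite Htau. rewrite !ln_mult; try lra; nra. }
    assert (B1 : ln (sqrt kappa) <= ln P) by (apply ln_le; lra).
    assert (B2 : ln P <= ln (3 * sqrt kappa)) by (apply ln_le; lra).
    assert (B3 : 0 <= ln (sqrt l)) by (rewrite <- ln_1; apply ln_le; lra).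
    assert (B4 : ln (sqrt l) <= sqrt l - 1) by (apply ln_le_sub1; lra).
    pose proof (Rle_abs (ln (sqrt kappa))). pose proof (Rle_abs (- ln (sqrt kappa))).
    rewrite Rabs_Ropp in H0.
    pose proof (Rle_abs (ln (3 * sqrt kappa))). pose proof (Rle_abs (- ln (3 * sqrt kappa))).
    rewrite Rabs_Ropp in H2.
    assert (HK : Rabs (ln t - l) <= K1 + sqrt l) by (apply Rabs_le; unfold K1; split; lra).
    replace (ln t / l - 1) with ((ln t - l) * / l) by (field; lra).
    rewrite Rabs_mult, (Rabs_pos_eq (/ l)) by (apply Rlt_le, Rinv_0_lt_compat; lra).
    assert (Ek : (K1 + sqrt l) * / l = K1 * / l + / sqrt l).
    { set (sl := sqrt l) in *. rewrite <- Hsl2. field. lra. }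
    rewrite <- Ek. apply Rmult_le_compat_r; auto. apply Rlt_le, Rinv_0_lt_compat; lra.
  - apply (tends_eq _ (K1 * 0 + 0)); [|ring]. apply tends_plus.
    + apply tends_scal. apply tends_inv_inf. apply ell_inf.
    + apply tends_inv_inf. apply tinf_sqrt. apply ell_inf.
Qed.

Lemma sqrt_ratio_lim : tends (fun t => / sqrt (ln t / ell t)) 1.
Proof.
  apply (tends_eq _ (/ 1)); [|apply Rinv_1]. apply tends_inv; [lra|].
  apply tends_sqrt1; [|apply lnratio].
  apply (ev_imp _ _ (ev_and _ _ (ev_gt 1) (ell_inf 0))). intros t [Ht Hl].
  apply Rdiv_le_0_compat; auto. rewrite <- ln_1. apply ln_le; lra.
Qed.

Lemma final_tau : tends (fun t => tau t / (2 * t * sqrt (kappa * ln t))) 1.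
Proof.
  pose proof (sqrt_lt_R0 _ Hk) as Hsk.
  apply (tends_ext (fun t => (/ (2 * sqrt kappa) * (Psi t / t)) * / sqrt (ln t / ell t))).
  - apply (ev_imp _ _ (ev_and _ _ (ev_gt 1) (ell_inf 0))). intros t [Ht Hl].
    assert (Hlt : 0 < ln t) by (rewrite <- ln_1; apply ln_increasing; lra).
    rewrite sqrt_div_alt by auto. rewrite sqrt_mult_alt by lra.
    pose proof (sqrt_lt_R0 _ Hlt). pose proof (sqrt_lt_R0 _ Hl).
    unfold Psi. field. repeat split; lra.
  - apply (tends_eq _ ((/ (2 * sqrt kappa) * (2 * sqrt kappa)) * 1)); [|field; lra].
    apply tends_mult; [|apply sqrt_ratio_lim]. apply tends_scal. apply Psi_lim.
Qed.

Lemma final_v : tends (fun t => Derive tau t / (2 * sqrt (kappa * ln t))) 1.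
Proof.
  pose proof (sqrt_lt_R0 _ Hk) as Hsk.
  apply (tends_ext (fun t => rr t * / sqrt (ln t / ell t))).
  - apply (ev_imp _ _ (ev_and _ _ (ev_gt 1) (ell_inf 0))). intros t [Ht Hl].
    assert (Hlt : 0 < ln t) by (rewrite <- ln_1; apply ln_increasing; lra).
    rewrite sqrt_div_alt by auto. rewrite sqrt_mult_alt by lra.
    pose proof (sqrt_lt_R0 _ Hlt). pose proof (sqrt_lt_R0 _ Hl).
    unfold rr. fold v. field. repeat split; lra.
  - apply (tends_eq _ (1 * 1)); [|ring]. apply tends_mult; [apply rr_lim|apply sqrt_ratio_lim].
Qed.

End Asym.

Theorem lemma3p2 (alpha kappa beta eps nu : R)
  (Halpha : 0 < alpha) (Hkappa : 0 < kappa) (Heps : 0 <= eps) (Hnu : 0 <= nu) :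
  (exists tau : R -> R, ode_solution kappa eps nu alpha beta tau) /\
  (forall tau1 tau2 : R -> R,
     ode_solution kappa eps nu alpha beta tau1 ->
     ode_solution kappa eps nu alpha beta tau2 ->
     forall t, 0 <= t -> tau1 t = tau2 t) /\
  (forall tau : R -> R, ode_solution kappa eps nu alpha beta tau ->
     is_lim (fun t => tau t / (2 * t * sqrt (kappa * ln t))) p_infty 1 /\
     is_lim (fun t => Derive tau t / (2 * sqrt (kappa * ln t))) p_infty 1).
Proof.
  split; [|split].
  - exists (xsol kappa eps nu alpha beta). apply existence; auto.
  - intros tau1 tau2 H1 H2 t Ht. apply (uniq kappa eps nu alpha beta Hkappa Heps Hnu Halpha tau1 tau2 H1 H2 t Ht).
  - intros tau Hs. split; apply tends_is_lim.
    + apply (final_tau kappa eps nu alpha beta Hkappa Heps Hnu Halpha tau Hs).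
    + apply (final_v kappa eps nu alpha beta Hkappa Heps Hnu Halpha tau Hs).
Qed.
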